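(* Let $H = C_5 + C_5 + C_5 + C_5 + C_5 + C_5$ be the Zykov sum of six disjoint copies of the $5$-cycle $C_5$. Then $H \to_e (3,3,3)$, i.e. for every coloring of the edges of $H$ in three colors there is a monochromatic triangle.
   Context: All graphs are finite, undirected, without loops or multiple edges. The Zykov sum $G_1+G_2$ of two vertex-disjoint graphs is the graph obtained from $G_1$ and $G_2$ by joining every vertex of $G_1$ to every vertex of $G_2$ (this operation is associative). For positive integers $a_1,\dots,a_r$, $G \to_e (a_1,\dots,a_r)$ means that for every coloring of $E(G)$ in $r$ colors there is some $i\in\{1,\dots,r\}$ and an $a_i$-clique all of whose edges have color $i$. *)

(* Defs.v *)
From mathcomp Require Import all_boot.
Set Implicit Arguments. Unset Strict Implicit. Unset Printing Implicit Defensive.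

Definition is_clique (T : finType) (e : rel T) (K : {set T}) : Prop :=
  forall x y, x \in K -> y \in K -> x != y -> e x y.

(* G ->_e (a_0, ..., a_{r-1}): every r-coloring of the edges (edges are
   identified with the 2-sets [set x; y] with e x y; the coloring is given as
   a function on 2-sets, of which only the values on edges matter) has a
   color i and an (a i)-clique all of whose edges have color i. *)
Definition edge_arrows (T : finType) (e : rel T) (r : nat) (a : 'I_r -> nat)
  : Prop :=
  forall c : {set T} -> 'I_r,
    exists i : 'I_r, exists K : {set T},
      [/\ #|K| = a i, is_clique e K &
          forall x y, x \in K -> y \in K -> x != y -> c [set x; y] = i].

Definition zykov_sum (T1 T2 : finType) (e1 : rel T1) (e2 : rel T2)
  : rel (T1 + T2)%type :=
  fun u v => match u, v with
             | inl x, inl y => e1 x y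
             | inr x, inr y => e2 x y
             | _, _ => true
             end.

Definition C5 : rel 'I_5 :=
  fun x y => (y == (x + 1) %% 5 :> nat) || (x == (y + 1) %% 5 :> nat).

(* H = C5 + C5 + C5 + C5 + C5 + C5 (the Zykov sum is associative). *)
Definition H6C5 :=
  zykov_sum C5 (zykov_sum C5 (zykov_sum C5 (zykov_sum C5 (zykov_sum C5 C5)))).

Definition three3 : 'I_3 -> nat := fun _ => 3.

(* Main.v *)
Require Import Defs.
From mathcomp Require Import all_boot.
From mathcomp Require Import zify.
From Stdlib Require Import Classical_Prop.
Set Implicit Arguments. Unset Strict Implicit. Unset Printing Implicit Defensive.

Definition cp v := v %/ 5.
Definition ps v := v %% 5.
Definition adjb u v := (u != v) && [|| cp u != cp v, ps v == (ps u).+1 %% 5 | ps u == (ps v).+1 %% 5].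

Definition mask := (bool * bool * bool)%type.
Definition fullm : mask := (true, true, true).
Definition bitm (c : nat) (m : mask) : bool :=
  match c with 0 => m.1.1 | 1 => m.1.2 | _ => m.2 end.
Definition onem (c : nat) : mask := (c == 0, c == 1, c == 2).
Definition clrm (c : nat) (m : mask) : mask := (m.1.1 && (c != 0), m.1.2 && (c != 1), m.2 && (c != 2)).
Definition emptym (m : mask) : bool := ~~ [|| m.1.1, m.1.2 | m.2].
Definition onlyc (c : nat) (m : mask) : bool := all (fun c' => bitm c' m ==> (c' == c)) [:: 0; 1; 2].

Definition dom := seq (seq mask).
Definition get (d : dom) u v : mask := nth fullm (nth [::] d u) v.
Definition setd1 (d : dom) u v m : dom := set_nth [::] d u (set_nth fullm (nth [::] d u) v m).
Definition setd (d : dom) u v m : dom := setd1 (setd1 d u v m) v u m.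

Fixpoint allsplits n : seq (seq nat) :=
  if n is n'.+1 then flatten [seq [seq c :: s | s <- allsplits n'] | c <- [:: 0; 1; 2]] else [:: [::]].
Definition S5 := allsplits 5.

Definition nxt p := p.+1 %% 5.
Definition omega (i : nat) (s : seq nat) : nat :=
  if has (fun x => (x.1 == i) && (x.2 == i)) (zip s (rot 1 s)) then 2
  else if i \in s then 1 else 0.
Definition prof (s : seq nat) : seq (nat * bool) :=
  [seq (omega i s, all (eq_op i) s) | i <- [:: 0; 1; 2]].
Definition addst (st p : seq (nat * bool)) : seq (nat * bool) :=
  [seq (x.1.1 + x.2.1, x.1.2 || x.2.2) | x <- zip st p].
Definition okst (st : seq (nat * bool)) : bool :=
  all (fun x => (x.1 <= 5) && (x.2 ==> (x.1 <= 4))) st.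
Definition ownst a b : seq (nat * bool) :=
  [seq (nat_of_bool ((a == i) || (b == i)), false) | i <- [:: 0; 1; 2]].

Fixpoint eqst (a b : seq (nat * bool)) : bool :=
  match a, b with
  | [::], [::] => true
  | x :: a', y :: b' => [&& x.1 == y.1, x.2 == y.2 & eqst a' b']
  | _, _ => false end.
Fixpoint lest (a b : seq (nat * bool)) : bool :=
  match a, b with
  | [::], [::] => true
  | x :: a', y :: b' => [&& x.1 <= y.1, x.2 ==> y.2 & lest a' b']
  | _, _ => false end.
Fixpoint undupa acc (s : seq (seq (nat * bool))) :=
  if s is x :: s' then
    if has (fun y => lest y x) acc then undupa acc s'
    else undupa (x :: filter (fun y => ~~ lest x y) acc) s'
  else acc.

Fixpoint allv (ms es : seq mask) (s t : seq nat) : bool :=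
  match ms, es, s, t with
  | m :: ms', e :: es', a :: s', b :: t' => [&& bitm a m, ~~ ((a == b) && onlyc a e) & allv ms' es' s' t']
  | _, _, _, _ => true end.
Definition validsplit ms es s := allv ms es s (rot 1 s).
Definition profs (d : dom) v k :=
  let ms := [seq get d v (5 * k + p) | p <- iota 0 5] in
  let es := [seq get d (5 * k + p) (5 * k + nxt p) | p <- iota 0 5] in
  undupa [::] [seq prof s | s <- S5 & validsplit ms es s].

Definition stepst (sts : seq (seq (nat * bool))) (ps : seq (seq (nat * bool))) :=
  undupa [::] (filter okst (flatten [seq [seq addst st p | p <- ps] | st <- sts])).

Definition ownnb v := 5 * cp v + nxt (ps v).
Definition ownnb' v := 5 * cp v + (ps v + 4) %% 5.

Definition locfeas (d : dom) v : bool :=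
  let own := flatten [seq [seq ownst a b | b <- [:: 0; 1; 2] & bitm b (get d v (ownnb' v))]
                     | a <- [:: 0; 1; 2] & bitm a (get d v (ownnb v))] in
  foldl (fun sts k => stepst sts (profs d v k)) (undupa [::] own) (filter (fun k => k != cp v) (iota 0 6)) != [::].

Inductive cert :=
 | CT (u v w c : nat) (k : cert)
 | CL (u v c x : nat) (k : cert)
 | CE (u v : nat)
 | CX (x : nat)
 | CB (u v : nat) (k0 k1 k2 : cert).

Fixpoint check (d : dom) (k : cert) : bool :=
  match k with
  | CT u v w c k => [&& u < 30, v < 30, w < 30, adjb u v, adjb u w, adjb v w,
                        onlyc c (get d u w), onlyc c (get d v w) & check (setd d u v (clrm c (get d u v))) k]
  | CL u v c x k => [&& u < 30, v < 30, x < 30, adjb u v, c < 3, ~~ locfeas (setd d u v (onem c)) x &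
                        check (setd d u v (clrm c (get d u v))) k]
  | CE u v => [&& u < 30, v < 30, adjb u v & emptym (get d u v)]
  | CX x => (x < 30) && ~~ locfeas d x
  | CB u v k0 k1 k2 => [&& u < 30, v < 30, adjb u v,
        bitm 0 (get d u v) ==> check (setd d u v (onem 0)) k0,
        bitm 1 (get d u v) ==> check (setd d u v (onem 1)) k1 &
        bitm 2 (get d u v) ==> check (setd d u v (onem 2)) k2]
  end.

Definition intern u v := (cp u == cp v) && adjb u v.
Definition dinit (pat : seq nat) : dom :=
  [seq [seq (if intern u v then onem (nth 0 pat (cp u)) else fullm) | v <- iota 0 30] | u <- iota 0 30].

Lemma bitm_onem c c' : c < 3 -> c' < 3 -> bitm c' (onem c) = (c' == c).
Proof. by case: c => [|[|[|]]] //; case: c' => [|[|[|]]]. Qed.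

Lemma bitm_clrm c c' m : c' < 3 -> bitm c' (clrm c m) = bitm c' m && (c' != c).
Proof. by case: m => [[a b] e]; case: c' => [|[|[|]]] //= _; rewrite ?(eq_sym c). Qed.

Lemma bitm_empty c m : emptym m -> bitm c m = false.
Proof. by case: m => [[[] []] []]; case: c => [|[|]]. Qed.

Lemma onlycP c c' m : onlyc c m -> bitm c' m -> c' < 3 -> c' = c.
Proof.
rewrite /onlyc => /allP h hb hc.
by apply/eqP; apply: (implyP (h c' _)) => //; rewrite !inE; case: c' hb hc => [|[|[|]]].
Qed.

Lemma bitm_full c : bitm c fullm.
Proof. by case: c => [|[|]]. Qed.

Lemma get_setd1 d u v m x y :
  get (setd1 d u v m) x y = if (x == u) && (y == v) then m else get d x y.
Proof.
rewrite /get /setd1 nth_set_nth /=.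
case: (x =P u) => [->|] //=.
by rewrite nth_set_nth /=; case: (y == v).
Qed.

Lemma get_setd d u v m x y :
  get (setd d u v m) x y =
  if ((x == u) && (y == v)) || ((x == v) && (y == u)) then m else get d x y.
Proof.
rewrite /setd !get_setd1.
by case: (x == v); case: (y == u); case: (x == u); case: (y == v).
Qed.

Section Checker.
Variable col : nat -> nat -> nat.
Hypothesis col_sym : forall x y, col x y = col y x.
Hypothesis col_lt : forall x y, col x y < 3.
Hypothesis NM : forall x y z, x < 30 -> y < 30 -> z < 30 -> adjb x y -> adjb y z -> adjb x z ->
  col x y = col y z -> col x y = col x z -> False.

Definition Sound (d : dom) := forall u v, u < 30 -> v < 30 -> adjb u v -> bitm (col u v) (get d u v).

Hypothesis LocalSound : forall d v, Sound d -> v < 30 -> locfeas d v.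

Lemma adjb_sym u v : adjb u v = adjb v u.
Proof. by rewrite /adjb eq_sym (eq_sym (cp u)); congr (_ && (_ || _)); exact: orbC. Qed.

Lemma Sound_setd d u v m : Sound d -> adjb u v -> bitm (col u v) m -> Sound (setd d u v m).
Proof.
move=> hs huv hb x y hx hy hxy; rewrite get_setd.
case: ifP => [/orP [/andP [/eqP -> /eqP ->] | /andP [/eqP -> /eqP ->]] | _] //.
- by rewrite col_sym.
- exact: hs.
Qed.

Lemma check_sound k d : check d k -> Sound d -> False.
Proof.
elim: k d => [u v w c k IH|u v c x k IH|u v|x|u v k0 IH0 k1 IH1 k2 IH2] d /=.
- case/and5P => hu hv hw huv /and5P [huw hvw ho1 ho2 hk] hs.
  apply: (IH _ hk); apply: Sound_setd => //.
  rewrite bitm_clrm // (hs _ _ hu hv huv) /=.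
  apply/eqP => ec.
  have e1 := onlycP ho1 (hs _ _ hu hw huw) (col_lt _ _).
  have e2 := onlycP ho2 (hs _ _ hv hw hvw) (col_lt _ _).
  apply: (NM hu hv hw huv hvw huw).
  + by rewrite ec e2.
  + by rewrite ec e1.
- case/and5P => hu hv hx huv /and3P [hc hl hk] hs.
  case: (col u v =P c) => [ec|nc].
  + have hb1 : bitm (col u v) (onem c) by rewrite bitm_onem // ec.
    by have := LocalSound (Sound_setd hs huv hb1) hx; rewrite (negbTE hl).
  + apply: (IH _ hk); apply: Sound_setd => //.
    by rewrite bitm_clrm // (hs _ _ hu hv huv); apply/eqP.
- case/and4P => hu hv huv he hs.
  by move: (hs _ _ hu hv huv); rewrite bitm_empty.
- case/andP => hx hl hs.
  by move: (LocalSound hs hx); rewrite (negbTE hl).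
- case/and5P => hu hv huv h0 /andP [h1 h2] hs.
  have hb := hs _ _ hu hv huv.
  have hs' : Sound (setd d u v (onem (col u v))).
    by apply: Sound_setd => //; rewrite bitm_onem ?eqxx.
  move: hb hs'; have := col_lt u v.
  case: (col u v) => [|[|[|]]] // _ hb hs'.
  + by apply: (IH0 _ (implyP h0 hb)).
  + by apply: (IH1 _ (implyP h1 hb)).
  + by apply: (IH2 _ (implyP h2 hb)).
Qed.

End Checker.

Lemma cp5 k p : p < 5 -> cp (5 * k + p) = k.
Proof. by move=> hp; rewrite /cp mulnC divnMDl // divn_small // addn0. Qed.
Lemma ps5 k p : p < 5 -> ps (5 * k + p) = p.
Proof. by move=> hp; rewrite /ps mulnC modnMDl modn_small. Qed.
Lemma ps_lt v : ps v < 5.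
Proof. by rewrite /ps ltn_mod. Qed.
Lemma cp_ps v : v = 5 * cp v + ps v.
Proof. by rewrite /cp /ps mulnC -divn_eq. Qed.
Lemma lt30 v : (v < 30) = (cp v < 6).
Proof.
apply/idP/idP => h.
- by rewrite /cp ltn_divLR.
- by rewrite [v]cp_ps; have := ps_lt v; move: h; clear; move: (cp v) (ps v) => a b; lia.
Qed.
Lemma lt30k k p : k < 6 -> p < 5 -> 5 * k + p < 30.
Proof. move=> hk hp; lia. Qed.
Lemma nxt_lt p : nxt p < 5.
Proof. by rewrite /nxt ltn_mod. Qed.
Lemma adjb_cp x y : cp x != cp y -> adjb x y.
Proof.
move=> h; rewrite /adjb h /= andbT.
by apply/eqP => exy; move: h; rewrite exy eqxx.
Qed.
Lemma adjb_in k p : p < 5 -> adjb (5 * k + p) (5 * k + nxt p).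
Proof.
move=> hp; rewrite /adjb !cp5 ?nxt_lt // !ps5 ?nxt_lt // eqxx /=.
by rewrite eqn_add2l /nxt; case: p hp => [|[|[|[|[|]]]]].
Qed.
Lemma adjb_irr x : adjb x x = false.
Proof. by rewrite /adjb eqxx. Qed.

Definition triples6 : seq (nat * nat * nat) :=
  flatten [seq flatten [seq [seq (a, b, c) | c <- iota 0 6 & b < c] | b <- iota 0 6 & a < b] | a <- iota 0 6].
Definition tri6 (f : nat -> nat -> bool) : bool :=
  all (fun abc => ~~ ((f abc.1.1 abc.1.2 == f abc.1.2 abc.2) && (f abc.1.1 abc.1.2 == f abc.1.1 abc.2))) triples6.
Fixpoint allbools n : seq (seq bool) :=
  if n is n'.+1 then [seq b :: l | l <- allbools n', b <- [:: true; false]] else [:: [::]].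
Definition pairs6 := flatten [seq [seq (a, b) | b <- iota 0 6 & a < b] | a <- iota 0 6].
Definition fl (l : seq bool) (a b : nat) : bool := nth false l (index (a, b) pairs6).

Lemma allbools_brute : all (fun l => ~~ tri6 (fl l)) (allbools 15).
Proof. by vm_compute. Qed.

Lemma mem_allbools n l : size l = n -> l \in allbools n.
Proof.
elim: n l => [|n IH] [|b l] // [hs].
rewrite [allbools _]/=.
apply/flatten_mapP; exists l; first exact: IH.
by case: b; rewrite !inE eqxx ?orbT.
Qed.

Lemma R33b (f : nat -> nat -> bool) : ~~ tri6 f.
Proof.
have := allP allbools_brute [seq f ab.1 ab.2 | ab <- pairs6].
rewrite mem_allbools; last by rewrite size_map.
by move/(_ isT).
Qed.

Definition nxt5 p := p.+1 %% 5.

Lemma odd_cycle (g : nat -> bool) : exists2 p, p < 5 & g p = g (nxt5 p).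
Proof.
case E0: (g 0 == g 1); first by exists 0 => //; apply/eqP.
case E1: (g 1 == g 2); first by exists 1 => //; apply/eqP.
case E2: (g 2 == g 3); first by exists 2 => //; apply/eqP.
case E3: (g 3 == g 4); first by exists 3 => //; apply/eqP.
exists 4 => //; rewrite /nxt5 /=.
by move: E0 E1 E2 E3; case: (g 0); case: (g 1); case: (g 2); case: (g 3); case: (g 4).
Qed.

Lemma Vlem (t : nat -> nat -> bool) (a b c : nat) (y : nat -> nat) :
  (forall p, p < 5 -> ~~ ((t a (y p) == t (y p) (y (nxt5 p))) && (t a (y p) == t a (y (nxt5 p))))) ->
  (forall p, p < 5 -> ~~ ((t b (y p) == t (y p) (y (nxt5 p))) && (t b (y p) == t b (y (nxt5 p))))) ->
  (forall p, p < 5 -> ~~ ((t c (y p) == t (y p) (y (nxt5 p))) && (t c (y p) == t c (y (nxt5 p))))) ->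
  (forall p, p < 5 -> ~~ ((t a b == t b (y p)) && (t a b == t a (y p)))) ->
  (forall p, p < 5 -> ~~ ((t a c == t c (y p)) && (t a c == t a (y p)))) ->
  ~~ ((t a b == t b c) && (t a b == t a c)) ->
  t a b = t a c /\ t b c = ~~ t a b.
Proof.
move=> H1 H2 H3 H4 H5 H6.
have [p hp E] := odd_cycle (fun p => t a (y p)).
have hq : nxt5 p < 5 by rewrite /nxt5 ltn_mod.
move: (H1 p hp) (H2 p hp) (H3 p hp) (H4 p hp) (H4 _ hq) (H5 p hp) (H5 _ hq) H6.
rewrite -E.
case: (t a (y p)); case: (t (y p) (y (nxt5 p))); case: (t a b); case: (t a c);
  case: (t b (y p)); case: (t b (y (nxt5 p))); case: (t c (y p)); case: (t c (y (nxt5 p)));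
  case: (t b c) => //.
Qed.

Lemma lest_refl a : lest a a.
Proof. by elim: a => //= x a ->; rewrite leqnn implybb. Qed.

Lemma lest_trans a b c : lest a b -> lest b c -> lest a c.
Proof.
elim: a b c => [|x a IH] [|y b] [|z c] //= /and3P [h1 h2 h3] /and3P [h4 h5 h6].
rewrite (leq_trans h1 h4) (IH _ _ h3 h6) andbT /=.
by move: h2 h5; case: (x.2); case: (y.2).
Qed.

Lemma lest_addst a a' b b' : lest a a' -> lest b b' -> lest (addst a b) (addst a' b').
Proof.
elim: a a' b b' => [|x a IH] [|x' a'] [|y b] [|y' b'] //= /and3P [h1 h2 h3] /and3P [h4 h5 h6].
rewrite /addst /= in IH *.
rewrite leq_add //= (IH _ _ _ h3 h6) andbT.
by move: h2 h5; case: (x.2); case: (x'.2); case: (y.2); case: (y'.2).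
Qed.

Lemma lest_okst a b : lest a b -> okst b -> okst a.
Proof.
elim: a b => [|x a IH] [|y b] //= /and3P [h1 h2 h3] /andP [/andP [h4 h5] h6].
rewrite (IH _ h3 h6) andbT (leq_trans h1 h4) /=.
apply/implyP => hx; apply: (leq_trans h1); exact: (implyP h5 (implyP h2 hx)).
Qed.

Lemma lest_addr a q : size q = size a -> lest a (addst a q).
Proof.
elim: a q => [|x a IH] [|y q] //= [hs].
rewrite /addst /= in IH *; rewrite leq_addr /= (IH _ hs) andbT.
by case: (x.2).
Qed.

Lemma size_addst a b : size (addst a b) = minn (size a) (size b).
Proof. by rewrite /addst size_map size_zip. Qed.

Lemma undupa_min acc s :
  (forall x, x \in acc -> exists2 y, y \in undupa acc s & lest y x) /\
  (forall x, x \in s -> exists2 y, y \in undupa acc s & lest y x).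
Proof.
elim: s acc => [|z s IH] acc /=.
  by split => // x hx; exists x => //; apply: lest_refl.
case: ifP => hh.
- have [IH1 IH2] := IH acc; split => // x; rewrite inE => /orP [/eqP ->|hx]; last exact: IH2.
  case/hasP: hh => y0 hy0 hl; have [y hy hl'] := IH1 _ hy0.
  by exists y => //; apply: lest_trans hl' hl.
- have [IH1 IH2] := IH (z :: filter (fun y => ~~ lest z y) acc).
  split => x.
  + move=> hx; case hzx: (lest z x).
    * have [y hy hl] := IH1 z (mem_head _ _); exists y => //; exact: lest_trans hl hzx.
    * by apply: IH1; rewrite inE mem_filter hzx hx orbT.
  + rewrite inE => /orP [/eqP ->|hx]; last exact: IH2.
    exact: IH1 (mem_head _ _).
Qed.

Lemma undupa_mem s x : x \in s -> exists2 y, y \in undupa [::] s & lest y x.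
Proof. by have [_ h] := undupa_min [::] s; apply: h. Qed.

Lemma mem_allsplits n s : size s = n -> all (fun c => c < 3) s -> s \in allsplits n.
Proof.
elim: n s => [|n IH] [|c s] // [hs] /andP [hc ha].
have hs' := IH s hs ha.
have hm : forall c', c' :: s \in [seq c' :: s0 | s0 <- allsplits n] by move=> c'; apply/mapP; exists s.
rewrite [allsplits _]/= /= !mem_cat.
by case: c hc => [|[|[|]]] // _; rewrite hm ?orbT.
Qed.

Lemma allv_map (l : seq nat) (f g : nat -> mask) (h h' : nat -> nat) :
  allv [seq f p | p <- l] [seq g p | p <- l] [seq h p | p <- l] [seq h' p | p <- l] =
  all (fun p => bitm (h p) (f p) && ~~ ((h p == h' p) && onlyc (h p) (g p))) l.
Proof. by elim: l => //= p l ->; rewrite andbA. Qed.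

Lemma nth_addst a b i : i < size a -> size b = size a ->
  nth (0, false) (addst a b) i = ((nth (0, false) a i).1 + (nth (0, false) b i).1,
                                 (nth (0, false) a i).2 || (nth (0, false) b i).2).
Proof.
move=> hi hs; rewrite /addst (nth_map ((0,false),(0,false))); last by rewrite size_zip hs minnn.
by rewrite nth_zip.
Qed.

Lemma okstP a : reflect (forall i, i < size a -> ((nth (0,false) a i).1 <= 5) && ((nth (0,false) a i).2 ==> ((nth (0,false) a i).1 <= 4))) (okst a).
Proof. exact: all_nthP. Qed.

Lemma two_col p q i : p < 3 -> q < 3 -> i < 3 -> p != i -> q != i ->
  (p == i.+1 %% 3) = (q == i.+1 %% 3) -> p = q.
Proof. by case: i => [|[|[|]]] //; case: p => [|[|[|]]] //; case: q => [|[|[|]]]. Qed.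

Lemma triples6_ok : all (fun abc => (abc.1.1 < abc.1.2) && (abc.1.2 < abc.2) && (abc.2 < 6)) triples6.
Proof. by []. Qed.

Section Local.
Variable col : nat -> nat -> nat.
Hypothesis col_sym : forall x y, col x y = col y x.
Hypothesis col_lt : forall x y, col x y < 3.
Hypothesis NM : forall x y z, x < 30 -> y < 30 -> z < 30 -> adjb x y -> adjb y z -> adjb x z ->
  col x y = col y z -> col x y = col x z -> False.
Variable v : nat.
Hypothesis hv : v < 30.

Definition inN i x := [/\ x < 30, adjb v x & col v x = i].

Lemma noi i x y : inN i x -> inN i y -> adjb x y -> col x y != i.
Proof.
case=> hx hvx cx [hy hvy cy] hxy; apply/eqP => e.
by apply: (NM hv hx hy hvx hxy hvy); rewrite ?cx ?cy ?e.
Qed.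

Definition tt i x y := col x y == i.+1 %% 3.

Lemma NTv i x y z : i < 3 -> inN i x -> inN i y -> inN i z -> adjb x y -> adjb y z -> adjb x z ->
  ~~ ((tt i x y == tt i y z) && (tt i x y == tt i x z)).
Proof.
move=> hi nx ny nz hxy hyz hxz; apply/negP => /andP [/eqP e1 /eqP e2].
have [hx _ _] := nx; have [hy _ _] := ny; have [hz _ _] := nz.
apply: (NM hx hy hz hxy hyz hxz).
- by apply: two_col (col_lt _ _) (col_lt _ _) hi (noi nx ny hxy) (noi ny nz hyz) e1.
- by apply: two_col (col_lt _ _) (col_lt _ _) hi (noi nx ny hxy) (noi nx nz hxz) e2.
Qed.

Definition GL i Q := [/\ uniq Q, (forall x, x \in Q -> inN i x) &
                        (forall x y, x \in Q -> y \in Q -> x != y -> adjb x y)].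

Lemma R33 i Q : i < 3 -> GL i Q -> 6 <= size Q -> False.
Proof.
move=> hi [hu hin hadj] hs.
pose x j := nth 0 Q j.
have hxin j : j < 6 -> x j \in Q by move=> hj; apply: mem_nth; apply: leq_trans hs.
have hxne a b : a < 6 -> b < 6 -> a != b -> x a != x b.
  move=> ha hb hab; rewrite /x nth_uniq //; by apply: leq_trans hs.
have := R33b (fun a b => tt i (x a) (x b)); move/negP; apply.
apply/allP => abc habc; have := allP triples6_ok _ habc.
case: abc habc => [[a b] c] _ /= /andP [/andP [hab hbc] hc].
have hb : b < 6 by lia. have ha : a < 6 by lia.
have nab : a != b by lia. have nbc : b != c by lia. have nac : a != c by lia.
apply: NTv => //; try apply: hin; try apply: hxin => //;
  apply: hadj; try apply: hxin => //; apply: hxne => //.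
Qed.

Lemma K3C5 i k0 Q : i < 3 -> k0 < 6 -> k0 != cp v -> (forall p, p < 5 -> col v (5 * k0 + p) = i) ->
  GL i Q -> 3 <= size Q -> (forall x, x \in Q -> cp x != k0) -> False.
Proof.
move=> hi hk hkv hcol [hu hin hadj] hs hcp.
pose x j := nth 0 Q j.
have hxin j : j < 3 -> x j \in Q by move=> hj; apply: mem_nth; apply: leq_trans hs.
have hxne a b : a < 3 -> b < 3 -> a != b -> x a != x b.
  move=> ha hb hab; rewrite /x nth_uniq //; by apply: leq_trans hs.
pose y p := 5 * k0 + p.
have hyN p : p < 5 -> inN i (y p).
  move=> hp; split; [exact: lt30k | | exact: hcol].
  by apply: adjb_cp; rewrite /y cp5 // eq_sym.
have hxy j p : j < 3 -> p < 5 -> adjb (x j) (y p).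
  by move=> hj hp; apply: adjb_cp; rewrite /y cp5 //; apply: hcp; apply: hxin.
have hyx j p : j < 3 -> p < 5 -> adjb (y p) (x j) by move=> hj hp; rewrite adjb_sym; apply: hxy.
have hyy p : p < 5 -> adjb (y p) (y (nxt5 p)) by move=> hp; apply: adjb_in.
have hnx p : p < 5 -> nxt5 p < 5 by move=> _; rewrite /nxt5 ltn_mod.
have hxx a b : a < 3 -> b < 3 -> a != b -> adjb (x a) (x b).
  by move=> ha hb hab; apply: hadj; try apply: hxin => //; apply: hxne.
have hxN j : j < 3 -> inN i (x j) by move=> hj; apply: hin; apply: hxin.
have T1 j : j < 3 -> forall p, p < 5 -> ~~ ((tt i (x j) (y p) == tt i (y p) (y (nxt5 p))) &&
                                         (tt i (x j) (y p) == tt i (x j) (y (nxt5 p)))).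
  move=> hj p hp; apply: NTv; auto.
have T2 a b : a < 3 -> b < 3 -> a != b -> forall p, p < 5 ->
  ~~ ((tt i (x a) (x b) == tt i (x b) (y p)) && (tt i (x a) (x b) == tt i (x a) (y p))).
  move=> ha hb hab p hp; apply: NTv; auto.
have T3 a b c : a < 3 -> b < 3 -> c < 3 -> a != b -> b != c -> a != c ->
  ~~ ((tt i (x a) (x b) == tt i (x b) (x c)) && (tt i (x a) (x b) == tt i (x a) (x c))).
  move=> ha hb hc hab hbc hac; apply: NTv; auto.
have [V1 V2] := Vlem (T1 0 isT) (T1 1 isT) (T1 2 isT) (T2 0 1 isT isT isT) (T2 0 2 isT isT isT)
                     (T3 0 1 2 isT isT isT isT isT isT).
have [V3 _] := Vlem (T1 1 isT) (T1 0 isT) (T1 2 isT) (T2 1 0 isT isT isT) (T2 1 2 isT isT isT)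
                     (T3 1 0 2 isT isT isT isT isT isT).
have e : tt i (x 1) (x 0) = tt i (x 0) (x 1) by rewrite /tt col_sym.
move: V3; rewrite e V2.
by case: (tt i (x 0) (x 1)).
Qed.

Definition sk k := [seq col v (5 * k + p) | p <- iota 0 5].
Definition others := filter (fun k => k != cp v) (iota 0 6).

Lemma GL_cat i Q1 Q2 : GL i Q1 -> GL i Q2 -> (forall x y, x \in Q1 -> y \in Q2 -> cp x != cp y) ->
  GL i (Q1 ++ Q2).
Proof.
move=> [u1 n1 a1] [u2 n2 a2] hd; split.
- rewrite cat_uniq u1 u2 andbT /=; apply/hasP => [[y hy2 hy1]].
  by have := hd _ _ hy1 hy2; rewrite eqxx.
- by move=> x; rewrite mem_cat => /orP [] ?; [apply: n1 | apply: n2].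
- move=> x y; rewrite !mem_cat => /orP [] hx /orP [] hy hxy.
  + exact: a1.
  + exact: adjb_cp (hd _ _ hx hy).
  + by rewrite adjb_sym; apply: adjb_cp (hd _ _ hy hx).
  + exact: a2.
Qed.

Lemma zip_sk k : zip (sk k) (rot 1 (sk k)) = [seq (col v (5 * k + p), col v (5 * k + nxt p)) | p <- iota 0 5].
Proof. by []. Qed.

Lemma clique_k i k : k < 6 -> k != cp v ->
  exists Q, [/\ size Q = omega i (sk k), GL i Q & forall x, x \in Q -> cp x = k].
Proof.
move=> hk hkv.
have hN p : p < 5 -> col v (5 * k + p) = i -> inN i (5 * k + p).
  move=> hp hc; split => //; first exact: lt30k.
  by apply: adjb_cp; rewrite cp5 // eq_sym.
rewrite /omega zip_sk; case: ifP => [/hasP [[c1 c2] /mapP [p hp [-> ->]] /andP [/eqP e1 /eqP e2]] | _].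
  have hp5 : p < 5 by move: hp; rewrite mem_iota.
  have hne : 5 * k + p != 5 * k + nxt p.
    rewrite eqn_add2l; apply/eqP => e.
    by move: hp5 e; rewrite /nxt; case: p {hp e1 e2} => [|[|[|[|[|]]]]].
  exists [:: 5 * k + p; 5 * k + nxt p]; split => //.
  - split.
    + by rewrite /= inE andbT.
    + by move=> x; rewrite !inE => /orP [] /eqP ->; apply: hN => //; apply: nxt_lt.
    + move=> x y; rewrite !inE => /orP [] /eqP -> /orP [] /eqP -> //; rewrite ?eqxx //.
      * by move=> _; apply: adjb_in.
      * by move=> _; rewrite adjb_sym; apply: adjb_in.
  - by move=> x; rewrite !inE => /orP [] /eqP ->; rewrite cp5 // nxt_lt.
case: ifP => [/mapP [p hp e] | _].
  have hp5 : p < 5 by move: hp; rewrite mem_iota.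
  exists [:: 5 * k + p]; split => //.
  - split => //; last by move=> x y; rewrite !inE => /eqP -> /eqP ->; rewrite eqxx.
    by move=> x; rewrite inE => /eqP ->; apply: hN.
  - by move=> x; rewrite inE => /eqP ->; rewrite cp5.
by exists [::].
Qed.

Lemma clique_ks i ks : uniq ks -> (forall k, k \in ks -> (k < 6) && (k != cp v)) ->
  exists Q, [/\ size Q = \sum_(k <- ks) omega i (sk k), GL i Q & forall x, x \in Q -> cp x \in ks].
Proof.
elim: ks => [|k ks IH] /=.
  by move=> _ _; exists [::]; rewrite big_nil.
move=> /andP [hk hu] h.
have [Q1 [s1 g1 c1]] : exists Q, [/\ size Q = omega i (sk k), GL i Q & forall x, x \in Q -> cp x = k].
  by have /andP [] := h k (mem_head _ _); apply: clique_k.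
have h2 : forall k', k' \in ks -> (k' < 6) && (k' != cp v) by move=> k' hk'; apply: h; rewrite inE hk' orbT.
have [Q2 [s2 g2 c2]] := IH hu h2.
exists (Q1 ++ Q2); split.
- by rewrite size_cat big_cons s1 s2.
- apply: GL_cat => // x y hx hy; rewrite (c1 _ hx); apply/eqP => e.
  by move: hk; rewrite e c2.
- by move=> x; rewrite mem_cat inE => /orP [hx|hx]; rewrite ?(c1 _ hx) ?eqxx // c2 ?orbT.
Qed.

Lemma nxt4 p : p < 5 -> nxt ((p + 4) %% 5) = p.
Proof. by case: p => [|[|[|[|[|]]]]]. Qed.

Lemma own_facts :
  [/\ ownnb v < 30, adjb v (ownnb v), cp (ownnb v) = cp v,
      ownnb' v < 30 & adjb v (ownnb' v) /\ cp (ownnb' v) = cp v].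
Proof.
have hc : cp v < 6 by rewrite -lt30.
have hp := ps_lt v.
have hp' : (ps v + 4) %% 5 < 5 by rewrite ltn_mod.
rewrite /ownnb /ownnb' !cp5 ?nxt_lt //; split => //.
- by apply: lt30k => //; apply: nxt_lt.
- set c := cp v; set p := ps v.
  have ev : v = 5 * c + p by rewrite /c /p -cp_ps.
  by rewrite [X in adjb X _]ev; apply: adjb_in.
- exact: lt30k.
- split => //; rewrite adjb_sym.
  set p' := (ps v + 4) %% 5; set c := cp v.
  have ev : v = 5 * c + nxt p' by rewrite /p' nxt4 // -cp_ps.
  by rewrite [X in adjb _ X]ev; apply: adjb_in.
Qed.

Lemma clique_own i a b : a = col v (ownnb v) -> b = col v (ownnb' v) ->
  exists Q, [/\ size Q = nat_of_bool ((a == i) || (b == i)), GL i Q & forall x, x \in Q -> cp x = cp v].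
Proof.
move=> -> ->; have [h1 h2 h3 h4 [h5 h6]] := own_facts.
case: (col v (ownnb v) =P i) => [e|_] /=.
  exists [:: ownnb v]; split => //.
  - split => //; last by move=> x y; rewrite !inE => /eqP -> /eqP ->; rewrite eqxx.
    by move=> x; rewrite inE => /eqP ->; split.
  - by move=> x; rewrite inE => /eqP ->.
case: (col v (ownnb' v) =P i) => [e|_] /=.
  exists [:: ownnb' v]; split => //.
  - split => //; last by move=> x y; rewrite !inE => /eqP -> /eqP ->; rewrite eqxx.
    by move=> x; rewrite inE => /eqP ->; split.
  - by move=> x; rewrite inE => /eqP ->.
by exists [::].
Qed.

Definition actst ks st0 := foldl (fun st k => addst st (prof (sk k))) st0 ks.

Lemma size_prof s : size (prof s) = 3.
Proof. by []. Qed.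

Lemma nth_prof s i : i < 3 -> nth (0, false) (prof s) i = (omega i s, all (eq_op i) s).
Proof. by case: i => [|[|[|]]]. Qed.

Lemma nth_ownst a b i : i < 3 -> nth (0, false) (ownst a b) i = (nat_of_bool ((a == i) || (b == i)), false).
Proof. by case: i => [|[|[|]]]. Qed.

Lemma size_act ks st0 : size st0 = 3 -> size (actst ks st0) = 3.
Proof.
elim: ks st0 => [|k ks IH] st0 //= hs; apply: IH.
by rewrite size_addst hs size_prof.
Qed.

Lemma act_comp ks st0 i : size st0 = 3 -> i < 3 ->
  nth (0, false) (actst ks st0) i =
  ((nth (0, false) st0 i).1 + \sum_(k <- ks) omega i (sk k),
   (nth (0, false) st0 i).2 || has (fun k => all (eq_op i) (sk k)) ks).
Proof.
elim: ks st0 => [|k ks IH] st0 hs hi /=.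
  by rewrite big_nil addn0 orbF; case: (nth _ _ _).
rewrite IH ?size_addst ?hs ?size_prof // nth_addst ?hs ?size_prof // nth_prof //= big_cons.
by rewrite addnA orbA.
Qed.

Lemma prefix_act ks st0 : size st0 = 3 -> lest st0 (actst ks st0).
Proof.
elim: ks st0 => [|k ks IH] st0 hs /=; first exact: lest_refl.
apply: lest_trans (IH _ _); first by apply: lest_addr; rewrite size_prof hs.
by rewrite size_addst hs size_prof.
Qed.

Lemma others_uniq : uniq others.
Proof. by rewrite /others filter_uniq // iota_uniq. Qed.

Lemma mem_others k : (k \in others) = (k < 6) && (k != cp v).
Proof. by rewrite /others mem_filter mem_iota add0n andbC. Qed.

Lemma LocalOK : okst (actst others (ownst (col v (ownnb v)) (col v (ownnb' v)))).
Proof.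
apply/okstP => i; rewrite size_act // => hi.
rewrite act_comp // nth_ownst //=.
set a := col v (ownnb v); set b := col v (ownnb' v).
have [Q1 [s1 g1 c1]] := clique_own i (erefl a) (erefl b).
have hoth : forall k, k \in others -> (k < 6) && (k != cp v) by move=> k; rewrite mem_others.
have [Q2 [s2 g2 c2]] := clique_ks i others_uniq hoth.
have g12 : GL i (Q1 ++ Q2).
  apply: GL_cat => // x y hx hy; rewrite c1 //; have := c2 _ hy; rewrite mem_others.
  by case/andP => _; rewrite eq_sym.
set W := _ + _.
have hW : W <= 5.
  rewrite leqNgt; apply/negP => hW; apply: (R33 _ g12) => //.
  by rewrite size_cat s1 s2.
rewrite hW /=; apply/implyP => /hasP [k0 hk0 hall].
have hcol : forall p, p < 5 -> col v (5 * k0 + p) = i.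
  move=> p hp; apply/esym/eqP; have /allP H : all (eq_op i) (sk k0) := hall; apply: H; apply/mapP; exists p => //.
  by rewrite mem_iota.
have hom : omega i (sk k0) = 2.
  rewrite /omega zip_sk; case: ifP => // /negbT /hasPn H.
  have h0 : (0 \in iota 0 5) by [].
  have := H _ (map_f (fun p => (col v (5 * k0 + p), col v (5 * k0 + nxt p))) h0).
  by rewrite /= !hcol ?eqxx.
have hk0o := hk0; move: hk0; rewrite mem_others => /andP [hk0 hkv].
have hoth3 : forall k, k \in filter (fun k => k != k0) others -> (k < 6) && (k != cp v).
  by move=> k; rewrite mem_filter => /andP [_]; rewrite mem_others.
have [Q3 [s3 g3 c3]] := clique_ks i (filter_uniq (fun k => k != k0) others_uniq) hoth3.
have hsum : \sum_(k <- others) omega i (sk k) =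
            omega i (sk k0) + \sum_(k <- filter (fun k => k != k0) others) omega i (sk k).
  by rewrite (bigD1_seq k0) //= ?others_uniq // big_filter.
have g13 : GL i (Q1 ++ Q3).
  apply: GL_cat => // x y hx hy; rewrite c1 //; have := c3 _ hy; rewrite mem_filter mem_others.
  by case/and3P => _ _; rewrite eq_sym.
rewrite /W hsum hom; rewrite leqNgt; apply/negP => hW5.
apply: (K3C5 hi hk0 hkv hcol g13).
- rewrite size_cat s1 s3; move: hW5; clear; lia.
- move=> x; rewrite mem_cat => /orP [hx|hx].
  + by rewrite c1 // eq_sym.
  + by have := c3 _ hx; rewrite mem_filter => /andP [h1 _]; apply: contra h1 => /eqP ->.
Qed.


Lemma dp d ks sts st0 :
  (forall k, k \in ks -> exists2 q, q \in profs d v k & lest q (prof (sk k))) ->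
  size st0 = 3 -> (exists2 s, s \in sts & lest s st0) -> okst (actst ks st0) ->
  exists2 s, s \in foldl (fun sts k => stepst sts (profs d v k)) sts ks & lest s (actst ks st0).
Proof.
elim: ks sts st0 => [|k ks IH] sts st0 hq hs [s hs0 hl] hok //=.
  by exists s.
have [q hq1 hq2] := hq k (mem_head _ _).
have hs' : size (addst st0 (prof (sk k))) = 3 by rewrite size_addst hs size_prof.
apply: IH => //.
- by move=> k' hk'; apply: hq; rewrite inE hk' orbT.
- have hl' : lest (addst s q) (addst st0 (prof (sk k))) by apply: lest_addst.
  have hin : addst s q \in filter okst (flatten [seq [seq addst st p | p <- profs d v k] | st <- sts]).
    rewrite mem_filter; apply/andP; split.
    + apply: lest_okst hl' _; apply: lest_okst hok; exact: prefix_act.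
    + by apply/flatten_mapP; exists s => //; apply: map_f.
  have [y hy hly] := undupa_mem hin.
  by exists y => //; apply: lest_trans hly hl'.
Qed.

Lemma validsplit_sk d k : Sound col d -> k < 6 -> k != cp v ->
  validsplit [seq get d v (5 * k + p) | p <- iota 0 5]
             [seq get d (5 * k + p) (5 * k + nxt p) | p <- iota 0 5] (sk k).
Proof.
move=> hs hk hkv.
rewrite /validsplit.
have -> : rot 1 (sk k) = [seq col v (5 * k + nxt p) | p <- iota 0 5] by [].
rewrite /sk allv_map; apply/allP => p; rewrite mem_iota add0n => /andP [_ hp].
have hx : 5 * k + p < 30 by apply: lt30k.
have hy : 5 * k + nxt p < 30 by apply: lt30k => //; apply: nxt_lt.
have hvx : adjb v (5 * k + p) by apply: adjb_cp; rewrite cp5 // eq_sym.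
have hvy : adjb v (5 * k + nxt p) by apply: adjb_cp; rewrite cp5 ?nxt_lt // eq_sym.
have hxy := adjb_in k hp.
rewrite (hs _ _ hv hx hvx) /=; apply/negP => /andP [/eqP e ho].
have e2 := onlycP ho (hs _ _ hx hy hxy) (col_lt _ _).
by apply: (NM hv hx hy hvx hxy hvy); rewrite ?e2 ?e.
Qed.

Lemma profs_sk d k : Sound col d -> k < 6 -> k != cp v ->
  exists2 q, q \in profs d v k & lest q (prof (sk k)).
Proof.
move=> hs hk hkv; rewrite /profs; apply: undupa_mem; apply: map_f.
rewrite mem_filter validsplit_sk //=; apply: mem_allsplits; first by rewrite size_map size_iota.
by apply/allP => c /mapP [p _ ->]; apply: col_lt.
Qed.

Lemma LocalSoundV d : Sound col d -> locfeas d v.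
Proof.
move=> hs; rewrite /locfeas.
have [h1 h2 h3 h4 [h5 h6]] := own_facts.
set a := col v (ownnb v); set b := col v (ownnb' v).
set own := flatten _.
have hown : ownst a b \in own.
  apply: allpairs_f.
    by rewrite mem_filter (hs _ _ hv h1 h2) /= !inE; have := col_lt v (ownnb v); rewrite -/a; case: a => [|[|[|]]].
  rewrite mem_filter (hs _ _ hv h4 h5) /= !inE.
  by have := col_lt v (ownnb' v); rewrite -/b; case: b => [|[|[|]]].
have [s0 hs0 hl0] := undupa_mem hown.
have := @dp d others (undupa [::] own) (ownst a b).
case.
- by move=> k; rewrite mem_others => /andP [hk hkv]; apply: profs_sk.
- by [].
- by exists s0.
- exact: LocalOK.
by move=> s; case: (foldl _ _ _).
Qed.

End Local.


Definition dfull : dom := [seq [seq fullm | v <- iota 0 30] | u <- iota 0 30].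
Definition monochk := all (fun v => all (fun a => all (fun b => (a == b) ||
   ~~ locfeas (setd (setd dfull v (ownnb v) (onem a)) v (ownnb' v) (onem b)) v) (iota 0 3)) (iota 0 3)) (iota 0 30).
Lemma monochk_true : monochk.
Proof. by vm_compute. Qed.

Lemma get_dfull u v : get dfull u v = fullm.
Proof.
rewrite /get /dfull; case: (ltnP u 30) => hu.
- rewrite (nth_map 0) ?size_iota //; case: (ltnP v 30) => hv.
  + by rewrite (nth_map 0) ?size_iota.
  + by rewrite nth_default ?size_map ?size_iota.
- by rewrite (nth_default [::]) ?nth_nil ?size_map ?size_iota.
Qed.

Lemma adjb_alt u v : adjb u v = (cp u != cp v) || ((ps v == nxt (ps u)) || (ps u == nxt (ps v))).
Proof.
rewrite /adjb; case: (cp u =P cp v) => e /=.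
- rewrite andb_idl //; case/orP => /eqP h; apply/eqP => euv; move: h; rewrite euv /nxt;
  by have := ps_lt v; case: (ps v) => [|[|[|[|[|]]]]].
- by rewrite andbT; apply/eqP => euv; apply: e; rewrite euv.
Qed.

Section Main.
Variable col : nat -> nat -> nat.
Hypothesis col_sym : forall x y, col x y = col y x.
Hypothesis col_lt : forall x y, col x y < 3.
Hypothesis NM : forall x y z, x < 30 -> y < 30 -> z < 30 -> adjb x y -> adjb y z -> adjb x z ->
  col x y = col y z -> col x y = col x z -> False.

Lemma LocalSound d v : Sound col d -> v < 30 -> locfeas d v.
Proof. by move=> hs hv; apply: (LocalSoundV col_sym col_lt NM hv). Qed.

Lemma mono_v v : v < 30 -> col v (ownnb v) = col v (ownnb' v).
Proof.
move=> hv; have [h1 h2 h3 h4 [h5 h6]] := own_facts hv.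
have hs0 : Sound col dfull by move=> x y _ _ _; rewrite get_dfull bitm_full.
have hb1 : bitm (col v (ownnb v)) (onem (col v (ownnb v))) by rewrite bitm_onem ?col_lt ?eqxx.
have hb2 : bitm (col v (ownnb' v)) (onem (col v (ownnb' v))) by rewrite bitm_onem ?col_lt ?eqxx.
have hs2 := Sound_setd col_sym (Sound_setd col_sym hs0 h2 hb1) h5 hb2.
have hl := LocalSound hs2 hv.
move: monochk_true; rewrite /monochk => /allP /(_ v); rewrite mem_iota leq0n add0n hv => /(_ isT).
move/allP/(_ (col v (ownnb v))); rewrite mem_iota leq0n add0n col_lt => /(_ isT).
move/allP/(_ (col v (ownnb' v))); rewrite mem_iota leq0n add0n col_lt => /(_ isT).
by rewrite hl orbF => /eqP.
Qed.


Lemma mono_copy k p : k < 6 -> p < 5 -> col (5 * k + p) (5 * k + nxt p) = col (5 * k) (5 * k + 1).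
Proof.
move=> hk; elim: p => [|p IH] hp; first by rewrite addn0.
have hp4 : p < 4 by lia.
have hv : 5 * k + p.+1 < 30 by apply: lt30k.
have := mono_v hv; rewrite /ownnb /ownnb' cp5 // ps5 // => ->.
have -> : (p.+1 + 4) %% 5 = p by rewrite addSn -addnS modnDr modn_small //; lia.
rewrite col_sym -IH; last by lia.
by rewrite /nxt modn_small //; lia.
Qed.

End Main.


Definition sv (s : seq nat) x := 5 * nth 0 s (cp x) + ps x.
Definition colp (p s : seq nat) (col : nat -> nat -> nat) x y := nth 0 p (col (sv s x) (sv s y)).

Lemma perm_nth_lt s n i : perm_eq s (iota 0 n) -> i < n -> nth 0 s i < n.
Proof.
move=> hp hi; have hs : size s = n by rewrite (perm_size hp) size_iota.
by have := mem_nth 0 (_ : i < size s); rewrite hs (perm_mem hp) mem_iota => /(_ hi).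
Qed.

Lemma perm_nth_inj s n i j : perm_eq s (iota 0 n) -> i < n -> j < n -> (nth 0 s i == nth 0 s j) = (i == j).
Proof.
move=> hp hi hj; have hs : size s = n by rewrite (perm_size hp) size_iota.
by rewrite nth_uniq ?hs // (perm_uniq hp) iota_uniq.
Qed.

Lemma cp_sv s x : cp (sv s x) = nth 0 s (cp x).
Proof. by rewrite /sv cp5 // ps_lt. Qed.
Lemma ps_sv s x : ps (sv s x) = ps x.
Proof. by rewrite /sv ps5 // ps_lt. Qed.

Lemma sv_lt s x : perm_eq s (iota 0 6) -> x < 30 -> sv s x < 30.
Proof. by move=> hp hx; rewrite lt30 cp_sv; apply: perm_nth_lt => //; rewrite -lt30. Qed.

Lemma adjb_sv s x y : perm_eq s (iota 0 6) -> x < 30 -> y < 30 -> adjb (sv s x) (sv s y) = adjb x y.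
Proof.
move=> hp hx hy; rewrite !adjb_alt !cp_sv !ps_sv (perm_nth_inj (n := 6)) // -lt30 //.
Qed.

Section Sym.
Variable col : nat -> nat -> nat.
Hypothesis col_sym : forall x y, col x y = col y x.
Hypothesis col_lt : forall x y, col x y < 3.
Hypothesis NM : forall x y z, x < 30 -> y < 30 -> z < 30 -> adjb x y -> adjb y z -> adjb x z ->
  col x y = col y z -> col x y = col x z -> False.
Variables s p : seq nat.
Hypothesis hs : perm_eq s (iota 0 6).
Hypothesis hp : perm_eq p (iota 0 3).

Lemma colp_sym x y : colp p s col x y = colp p s col y x.
Proof. by rewrite /colp col_sym. Qed.
Lemma colp_lt x y : colp p s col x y < 3.
Proof. by apply: perm_nth_lt. Qed.
Lemma colp_NM x y z : x < 30 -> y < 30 -> z < 30 -> adjb x y -> adjb y z -> adjb x z ->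
  colp p s col x y = colp p s col y z -> colp p s col x y = colp p s col x z -> False.
Proof.
move=> hx hy hz hxy hyz hxz /eqP e1 /eqP e2.
move: e1 e2; rewrite /colp !(perm_nth_inj (n := 3)) // => /eqP e1 /eqP e2.
apply: (NM (sv_lt hs hx) (sv_lt hs hy) (sv_lt hs hz)) => //; by rewrite adjb_sv.
Qed.
End Sym.

Definition colperms : seq (seq nat) :=
  [:: [:: 0; 1; 2]; [:: 0; 2; 1]; [:: 1; 0; 2]; [:: 1; 2; 0]; [:: 2; 0; 1]; [:: 2; 1; 0]].
Definition ncount (p cv : seq nat) c := count (fun x => nth 0 p x == c) cv.
Definition choosep cv := head [:: 0; 1; 2]
  [seq p <- colperms | (ncount p cv 1 <= ncount p cv 0) && (ncount p cv 2 <= ncount p cv 1)].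
Definition chooses (p cv : seq nat) :=
  flatten [seq [seq k <- iota 0 6 | nth 0 p (nth 0 cv k) == c] | c <- iota 0 3].
Definition newvec (s p cv : seq nat) := [seq nth 0 p (nth 0 cv (nth 0 s k)) | k <- iota 0 6].
Definition pats : seq (seq nat) :=
  [:: [:: 0; 0; 0; 0; 0; 0]; [:: 0; 0; 0; 0; 0; 1]; [:: 0; 0; 0; 0; 1; 1]; [:: 0; 0; 0; 0; 1; 2];
      [:: 0; 0; 0; 1; 1; 1]; [:: 0; 0; 0; 1; 1; 2]; [:: 0; 0; 1; 1; 2; 2]].
Definition goodcv cv := let p := choosep cv in let s := chooses p cv in
  [&& perm_eq s (iota 0 6), perm_eq p (iota 0 3) & newvec s p cv \in pats].
Lemma allgood : all goodcv (allsplits 6).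
Proof. by vm_compute. Qed.

Definition cvec (col : nat -> nat -> nat) := [seq col (5 * k) (5 * k + 1) | k <- iota 0 6].

Lemma cvec_colp col s p : perm_eq s (iota 0 6) -> cvec (colp p s col) = newvec s p (cvec col).
Proof.
move=> hs; apply/eq_in_map => k; rewrite mem_iota add0n => /andP [_ hk].
have hsk := perm_nth_lt hs hk.
have e0 : cp (5 * k) = k by rewrite -[5 * k]addn0 cp5.
have e1 : ps (5 * k) = 0 by rewrite -[5 * k]addn0 ps5.
rewrite /colp /sv e0 e1 cp5 // ps5 // addn0 (nth_map 0) ?size_iota // nth_iota // add0n.
Qed.

Lemma get_dinit P u v : u < 30 -> v < 30 ->
  get (dinit P) u v = if intern u v then onem (nth 0 P (cp u)) else fullm.
Proof.
move=> hu hv; rewrite /get /dinit (nth_map 0) ?size_iota // (nth_map 0) ?size_iota //.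
by rewrite !nth_iota.
Qed.

Lemma Sound_dinit col : (forall x y, col x y = col y x) -> (forall x y, col x y < 3) ->
  (forall x y z, x < 30 -> y < 30 -> z < 30 -> adjb x y -> adjb y z -> adjb x z ->
     col x y = col y z -> col x y = col x z -> False) ->
  Sound col (dinit (cvec col)).
Proof.
move=> hsym hlt hnm u v hu hv huv; rewrite get_dinit //.
case: ifP => [/andP [/eqP ecp _]|_]; last exact: bitm_full.
have hk : cp u < 6 by rewrite -lt30.
rewrite (nth_map 0) ?size_iota // nth_iota // add0n.
suff -> : col u v = col (5 * cp u) (5 * cp u + 1) by rewrite bitm_onem ?hlt ?eqxx.
set k := cp u.
have gen : forall x y, cp x = k -> cp y = k -> ps y = nxt (ps x) -> col x y = col (5 * k) (5 * k + 1).
  move=> x y hx hy e.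
  have -> : x = 5 * k + ps x by rewrite -hx -cp_ps.
  have -> : y = 5 * k + ps y by rewrite -hy -cp_ps.
  by rewrite e; apply: (mono_copy hsym hlt hnm) => //; apply: ps_lt.
move: huv; rewrite adjb_alt ecp eqxx /= => /orP [/eqP e|/eqP e].
- by apply: gen => //; rewrite -ecp.
- by rewrite hsym; apply: gen => //; rewrite -ecp.
Qed.

Definition cert_000000 : cert :=
(CX 0).
Definition cert_000001 : cert :=
(CX 25).
Definition cert_000011 : cert :=
(CL 20 29 1 20 (CL 20 29 2 20 (CL 20 28 1 20 (CL 20 28 2 20 (CL 20 27 1 20 (CL 20 27 2 20 (CL 20 26 1 20 (CL 20 26 2 20 (CL 20 25 1 20 (CL 20 25 2 20 (CB 0 20
(CT 0 29 20 0 (CT 0 28 20 0 (CT 0 27 20 0 (CT 0 26 20 0 (CT 0 25 20 0 (CT 4 20 0 0 (CT 1 20 0 0 (CL 0 29 1 0 (CL 0 28 1 0 (CL 0 27 1 0 (CL 0 26 1 0 (CL 0 25 1 0 (CL 0 21 2 0 (CL 1 21 1 1 (CL 4 21 1 4 (CL 4 20 2 20 (CL 3 20 2 20 (CL 2 20 2 20 (CL 4 21 2 21 (CT 3 21 4 0 (CT 0 21 4 0 (CL 3 21 2 21 (CT 3 20 21 1 (CT 2 20 3 0 (CT 2 21 20 1 (CL 2 21 0 21 (CL 2 21 2 21 (CE 2 21))))))))))))))))))))))))))))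
(CT 0 24 20 1 (CT 0 21 20 1 (CL 0 24 2 0 (CT 4 24 0 0 (CT 1 24 0 0 (CL 0 21 2 0 (CT 4 21 0 0 (CT 1 21 0 0 (CL 1 23 1 1 (CL 1 22 1 1 (CL 1 20 1 1 (CL 4 23 1 4 (CL 4 22 1 4 (CL 4 20 1 4 (CL 4 20 2 20 (CT 3 20 4 0 (CL 3 20 2 20 (CT 3 21 20 1 (CL 2 20 0 20 (CL 2 20 2 20 (CT 2 21 20 1 (CX 21))))))))))))))))))))))
(CL 0 24 1 0 (CL 0 23 1 0 (CL 0 22 1 0 (CL 0 21 1 0 (CL 4 20 0 20 (CL 4 20 1 20 (CL 1 20 0 20 (CL 1 20 1 20 (CL 4 21 0 21 (CL 1 21 0 21 (CL 4 22 0 22 (CL 1 22 0 22 (CL 4 23 0 23 (CL 1 23 0 23 (CL 4 24 0 24 (CL 1 24 0 24 (CL 1 29 2 1 (CL 1 28 2 1 (CL 1 27 2 1 (CL 1 26 2 1 (CL 1 25 2 1 (CL 4 29 2 4 (CL 4 28 2 4 (CL 4 27 2 4 (CL 4 26 2 4 (CL 4 25 2 4 (CL 0 25 2 25 (CL 3 26 2 26 (CL 3 27 2 27 (CL 3 28 2 28 (CL 2 28 2 28 (CL 3 29 2 29 (CL 2 29 2 29 (CL 0 29 2 29 (CB 0 25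
(CT 4 25 0 0 (CT 4 29 25 1 (CT 3 29 4 0 (CT 3 28 29 1 (CT 4 28 3 0 (CT 4 27 28 1 (CT 3 27 4 0 (CT 3 26 27 1 (CT 4 26 3 0 (CT 25 26 4 1 (CE 25 26)))))))))))
(CT 0 29 25 1 (CT 4 29 0 0 (CT 4 28 29 1 (CT 3 28 4 0 (CT 3 29 28 1 (CT 2 29 3 0 (CT 2 28 29 1 (CT 1 28 2 0 (CT 1 29 28 1 (CT 0 29 1 0 (CE 0 29)))))))))))
(CE 0 0))))))))))))))))))))))))))))))))))))))))))))))).
Definition cert_000012 : cert :=
(CL 20 29 1 20 (CL 20 29 2 20 (CL 20 28 1 20 (CL 20 28 2 20 (CL 20 27 1 20 (CL 20 27 2 20 (CL 20 26 1 20 (CL 20 26 2 20 (CL 20 25 1 20 (CL 20 25 2 20 (CB 0 20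
(CT 0 29 20 0 (CT 0 28 20 0 (CT 0 27 20 0 (CT 0 26 20 0 (CT 0 25 20 0 (CT 4 20 0 0 (CT 1 20 0 0 (CL 0 29 2 0 (CL 0 28 2 0 (CL 0 27 2 0 (CL 0 26 2 0 (CL 0 25 2 0 (CL 0 21 1 0 (CL 1 21 1 1 (CL 4 21 1 4 (CL 4 20 2 20 (CL 1 20 2 20 (CL 4 21 0 21 (CL 3 21 0 21 (CL 3 21 1 21 (CL 2 21 0 21 (CL 2 21 1 21 (CL 1 21 0 21 (CX 1))))))))))))))))))))))))
(CT 0 24 20 1 (CT 0 21 20 1 (CL 0 24 2 0 (CT 4 24 0 0 (CT 1 24 0 0 (CL 0 21 2 0 (CT 4 21 0 0 (CT 1 21 0 0 (CL 1 23 1 1 (CL 1 22 1 1 (CL 1 20 1 1 (CL 4 23 1 4 (CL 4 22 1 4 (CL 4 20 1 4 (CL 4 20 2 20 (CT 3 20 4 0 (CL 3 20 2 20 (CT 3 21 20 1 (CL 2 20 0 20 (CL 2 20 2 20 (CT 2 21 20 1 (CX 21))))))))))))))))))))))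
(CL 0 24 1 0 (CL 0 23 1 0 (CL 0 22 1 0 (CL 0 21 1 0 (CL 4 20 0 20 (CL 4 20 1 20 (CL 1 20 0 20 (CL 1 20 1 20 (CL 4 21 0 21 (CL 1 21 0 21 (CL 4 22 0 22 (CL 1 22 0 22 (CL 4 23 0 23 (CL 1 23 0 23 (CL 4 24 0 24 (CL 1 24 0 24 (CL 1 26 2 1 (CL 1 25 2 1 (CL 1 21 1 1 (CL 4 26 2 4 (CL 4 25 2 4 (CL 0 21 0 21 (CL 3 25 0 25 (CL 2 25 0 25 (CL 0 25 0 25 (CL 3 26 0 26 (CL 2 26 0 26 (CL 0 26 0 26 (CX 0)))))))))))))))))))))))))))))))))))))))).
Definition cert_000111 : cert :=
(CB 0 5
(CT 0 9 5 0 (CT 1 5 0 0 (CL 0 14 2 0 (CL 0 13 2 0 (CL 0 12 2 0 (CL 0 11 2 0 (CL 0 10 2 0 (CL 0 9 2 0 (CL 0 8 2 0 (CL 0 7 2 0 (CL 5 14 2 5 (CL 5 13 2 5 (CL 5 12 2 5 (CL 5 11 2 5 (CL 5 10 2 5 (CL 9 10 2 10 (CL 9 11 2 11 (CL 9 12 2 12 (CL 9 13 2 13 (CL 9 14 2 14 (CB 0 7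
(CB 0 10
(CT 0 14 10 0 (CT 9 14 0 1 (CT 9 13 14 0 (CT 0 13 9 1 (CT 0 12 13 0 (CT 9 12 0 1 (CT 9 11 12 0 (CT 0 11 9 1 (CT 10 11 0 0 (CE 10 11))))))))))
(CT 9 10 0 1 (CT 9 14 10 0 (CT 0 14 9 1 (CT 0 13 14 0 (CT 9 13 0 1 (CT 9 12 13 0 (CT 0 12 9 1 (CT 0 11 12 0 (CT 9 11 0 1 (CT 10 11 9 0 (CE 10 11)))))))))))
(CE 0 0))
(CB 0 8
(CB 0 10
(CT 0 14 10 0 (CT 9 14 0 1 (CT 9 13 14 0 (CT 0 13 9 1 (CT 0 12 13 0 (CT 9 12 0 1 (CT 9 11 12 0 (CT 0 11 9 1 (CT 10 11 0 0 (CE 10 11))))))))))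
(CT 9 10 0 1 (CT 9 14 10 0 (CT 0 14 9 1 (CT 0 13 14 0 (CT 9 13 0 1 (CT 9 12 13 0 (CT 0 12 9 1 (CT 0 11 12 0 (CT 9 11 0 1 (CT 10 11 9 0 (CE 10 11)))))))))))
(CE 0 0))
(CB 0 10
(CT 0 14 10 0 (CT 9 14 0 1 (CT 9 13 14 0 (CT 0 13 9 1 (CT 0 12 13 0 (CT 9 12 0 1 (CT 9 11 12 0 (CT 0 11 9 1 (CT 10 11 0 0 (CE 10 11))))))))))
(CT 9 10 0 1 (CT 9 14 10 0 (CT 0 14 9 1 (CT 0 13 14 0 (CT 9 13 0 1 (CT 9 12 13 0 (CT 0 12 9 1 (CT 0 11 12 0 (CT 9 11 0 1 (CT 10 11 9 0 (CE 10 11)))))))))))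
(CE 0 0))
(CE 0 0))
(CE 0 0))))))))))))))))))))))
(CL 0 9 2 0 (CL 0 8 2 0 (CL 0 7 2 0 (CL 0 6 2 0 (CL 4 5 2 5 (CL 3 5 2 5 (CL 2 5 2 5 (CL 1 5 2 5 (CL 4 6 2 6 (CL 3 6 2 6 (CL 2 6 2 6 (CL 1 6 2 6 (CL 4 7 2 7 (CL 3 7 2 7 (CL 2 7 2 7 (CL 1 7 2 7 (CL 4 8 2 8 (CL 3 8 2 8 (CL 2 8 2 8 (CL 1 8 2 8 (CL 4 9 2 9 (CL 3 9 2 9 (CL 2 9 2 9 (CL 1 9 2 9 (CB 0 6
(CT 1 6 0 0 (CL 0 14 2 0 (CL 0 13 2 0 (CL 0 12 2 0 (CL 0 11 2 0 (CL 0 10 2 0 (CL 6 14 2 6 (CL 6 13 2 6 (CL 6 12 2 6 (CL 6 11 2 6 (CL 6 10 2 6 (CL 9 10 2 10 (CL 8 10 2 10 (CL 9 11 2 11 (CL 8 11 2 11 (CL 9 12 2 12 (CL 8 12 2 12 (CL 9 13 2 13 (CL 8 13 2 13 (CL 9 14 2 14 (CL 8 14 2 14 (CB 0 8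
(CT 0 9 8 0 (CB 0 10
(CT 0 14 10 0 (CT 9 14 0 1 (CT 9 13 14 0 (CT 0 13 9 1 (CT 0 12 13 0 (CT 9 12 0 1 (CT 9 11 12 0 (CT 0 11 9 1 (CT 10 11 0 0 (CE 10 11))))))))))
(CT 9 10 0 1 (CT 9 14 10 0 (CT 0 14 9 1 (CT 0 13 14 0 (CT 9 13 0 1 (CT 9 12 13 0 (CT 0 12 9 1 (CT 0 11 12 0 (CT 9 11 0 1 (CT 10 11 9 0 (CE 10 11)))))))))))
(CE 0 0)))
(CB 0 9
(CB 0 10
(CT 0 14 10 0 (CT 8 14 0 1 (CT 8 13 14 0 (CT 0 13 8 1 (CT 0 12 13 0 (CT 8 12 0 1 (CT 8 11 12 0 (CT 0 11 8 1 (CT 10 11 0 0 (CE 10 11))))))))))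
(CT 8 10 0 1 (CT 8 14 10 0 (CT 0 14 8 1 (CT 0 13 14 0 (CT 8 13 0 1 (CT 8 12 13 0 (CT 0 12 8 1 (CT 0 11 12 0 (CT 8 11 0 1 (CT 10 11 8 0 (CE 10 11)))))))))))
(CE 0 0))
(CB 0 10
(CT 0 14 10 0 (CT 9 14 0 1 (CT 9 13 14 0 (CT 0 13 9 1 (CT 0 12 13 0 (CT 9 12 0 1 (CT 9 11 12 0 (CT 0 11 9 1 (CT 10 11 0 0 (CE 10 11))))))))))
(CT 9 10 0 1 (CT 9 14 10 0 (CT 0 14 9 1 (CT 0 13 14 0 (CT 9 13 0 1 (CT 9 12 13 0 (CT 0 12 9 1 (CT 0 11 12 0 (CT 9 11 0 1 (CT 10 11 9 0 (CE 10 11)))))))))))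
(CE 0 0))
(CE 0 0))
(CE 0 0)))))))))))))))))))))))
(CB 0 7
(CT 0 8 7 0 (CT 1 7 0 0 (CL 0 14 2 0 (CL 0 13 2 0 (CL 0 12 2 0 (CL 0 11 2 0 (CL 0 10 2 0 (CL 7 14 2 7 (CL 7 13 2 7 (CL 7 12 2 7 (CL 7 11 2 7 (CL 7 10 2 7 (CL 9 10 2 10 (CL 8 10 2 10 (CL 9 11 2 11 (CL 8 11 2 11 (CL 9 12 2 12 (CL 8 12 2 12 (CL 9 13 2 13 (CL 8 13 2 13 (CL 9 14 2 14 (CL 8 14 2 14 (CB 0 9
(CB 0 10
(CT 0 14 10 0 (CT 8 14 0 1 (CT 8 13 14 0 (CT 0 13 8 1 (CT 0 12 13 0 (CT 8 12 0 1 (CT 8 11 12 0 (CT 0 11 8 1 (CT 10 11 0 0 (CE 10 11))))))))))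
(CT 8 10 0 1 (CT 8 14 10 0 (CT 0 14 8 1 (CT 0 13 14 0 (CT 8 13 0 1 (CT 8 12 13 0 (CT 0 12 8 1 (CT 0 11 12 0 (CT 8 11 0 1 (CT 10 11 8 0 (CE 10 11)))))))))))
(CE 0 0))
(CB 0 10
(CT 0 14 10 0 (CT 9 14 0 1 (CT 9 13 14 0 (CT 0 13 9 1 (CT 0 12 13 0 (CT 9 12 0 1 (CT 9 11 12 0 (CT 0 11 9 1 (CT 10 11 0 0 (CE 10 11))))))))))
(CT 9 10 0 1 (CT 9 14 10 0 (CT 0 14 9 1 (CT 0 13 14 0 (CT 9 13 0 1 (CT 9 12 13 0 (CT 0 12 9 1 (CT 0 11 12 0 (CT 9 11 0 1 (CT 10 11 9 0 (CE 10 11)))))))))))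
(CE 0 0))
(CE 0 0))))))))))))))))))))))))
(CB 0 8
(CT 0 9 8 0 (CT 1 8 0 0 (CL 0 14 2 0 (CL 0 13 2 0 (CL 0 12 2 0 (CL 0 11 2 0 (CL 0 10 2 0 (CL 8 14 2 8 (CL 8 13 2 8 (CL 8 12 2 8 (CL 8 11 2 8 (CL 8 10 2 8 (CL 9 10 2 10 (CL 9 11 2 11 (CL 9 12 2 12 (CL 9 13 2 13 (CL 9 14 2 14 (CB 0 10
(CT 0 14 10 0 (CT 9 14 0 1 (CT 9 13 14 0 (CT 0 13 9 1 (CT 0 12 13 0 (CT 9 12 0 1 (CT 9 11 12 0 (CT 0 11 9 1 (CT 10 11 0 0 (CE 10 11))))))))))
(CT 9 10 0 1 (CT 9 14 10 0 (CT 0 14 9 1 (CT 0 13 14 0 (CT 9 13 0 1 (CT 9 12 13 0 (CT 0 12 9 1 (CT 0 11 12 0 (CT 9 11 0 1 (CT 10 11 9 0 (CE 10 11)))))))))))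
(CE 0 0)))))))))))))))))))
(CB 0 9
(CT 1 9 0 0 (CL 0 14 2 0 (CL 0 13 2 0 (CL 0 12 2 0 (CL 0 11 2 0 (CL 0 10 2 0 (CL 9 14 2 9 (CL 9 13 2 9 (CL 9 12 2 9 (CL 9 11 2 9 (CL 9 10 2 9 (CL 8 10 2 10 (CL 8 11 2 11 (CL 8 12 2 12 (CL 8 13 2 13 (CL 8 14 2 14 (CB 0 10
(CT 0 14 10 0 (CT 8 14 0 1 (CT 8 13 14 0 (CT 0 13 8 1 (CT 0 12 13 0 (CT 8 12 0 1 (CT 8 11 12 0 (CT 0 11 8 1 (CT 10 11 0 0 (CE 10 11))))))))))
(CT 8 10 0 1 (CT 8 14 10 0 (CT 0 14 8 1 (CT 0 13 14 0 (CT 8 13 0 1 (CT 8 12 13 0 (CT 0 12 8 1 (CT 0 11 12 0 (CT 8 11 0 1 (CT 10 11 8 0 (CE 10 11)))))))))))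
(CE 0 0))))))))))))))))))
(CB 1 5
(CT 1 9 5 0 (CT 1 6 5 0 (CL 1 14 2 1 (CL 1 13 2 1 (CL 1 12 2 1 (CL 1 11 2 1 (CL 1 10 2 1 (CL 4 10 2 10 (CL 3 10 2 10 (CL 2 10 2 10 (CL 0 10 2 10 (CL 4 11 2 11 (CL 3 11 2 11 (CL 2 11 2 11 (CL 0 11 2 11 (CL 0 29 1 0 (CL 0 28 1 0 (CL 0 27 1 0 (CL 0 26 1 0 (CL 0 25 1 0 (CL 0 24 1 0 (CL 0 23 1 0 (CL 0 22 1 0 (CL 0 21 1 0 (CL 0 20 1 0 (CL 0 19 1 0 (CL 0 18 1 0 (CL 0 17 1 0 (CL 0 16 1 0 (CL 0 15 1 0 (CL 1 15 0 15 (CL 1 16 0 16 (CL 1 17 0 17 (CL 1 18 0 18 (CL 1 19 0 19 (CL 1 20 0 20 (CL 1 21 0 21 (CL 1 22 0 22 (CL 1 23 0 23 (CL 1 24 0 24 (CL 1 25 0 25 (CL 1 26 0 26 (CL 1 27 0 27 (CL 1 28 0 28 (CL 1 29 0 29 (CX 1))))))))))))))))))))))))))))))))))))))))))))))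
(CB 2 5
(CT 2 6 5 0 (CL 2 14 2 2 (CL 2 13 2 2 (CL 2 12 2 2 (CL 2 11 2 2 (CL 2 10 2 2 (CL 3 10 2 10 (CL 1 10 2 10 (CL 0 10 2 10 (CL 3 11 2 11 (CL 1 11 2 11 (CL 0 11 2 11 (CL 0 29 1 0 (CL 0 28 1 0 (CL 0 27 1 0 (CL 0 26 1 0 (CL 0 25 1 0 (CL 0 24 1 0 (CL 0 23 1 0 (CL 0 22 1 0 (CL 0 21 1 0 (CL 0 20 1 0 (CL 0 19 1 0 (CL 0 18 1 0 (CL 0 17 1 0 (CL 0 16 1 0 (CL 0 15 1 0 (CL 1 15 0 15 (CL 1 16 0 16 (CL 1 17 0 17 (CL 1 18 0 18 (CL 1 19 0 19 (CL 1 20 0 20 (CL 1 21 0 21 (CL 1 22 0 22 (CL 1 23 0 23 (CL 1 24 0 24 (CL 1 25 0 25 (CL 1 26 0 26 (CL 1 27 0 27 (CL 1 28 0 28 (CL 1 29 0 29 (CX 1)))))))))))))))))))))))))))))))))))))))))))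
(CB 3 5
(CT 3 6 5 0 (CL 3 14 2 3 (CL 3 13 2 3 (CL 3 12 2 3 (CL 3 11 2 3 (CL 3 10 2 3 (CL 4 10 2 10 (CL 2 10 2 10 (CL 1 10 2 10 (CL 0 10 2 10 (CL 4 11 2 11 (CL 2 11 2 11 (CL 1 11 2 11 (CL 0 11 2 11 (CL 0 29 1 0 (CL 0 28 1 0 (CL 0 27 1 0 (CL 0 26 1 0 (CL 0 25 1 0 (CL 0 24 1 0 (CL 0 23 1 0 (CL 0 22 1 0 (CL 0 21 1 0 (CL 0 20 1 0 (CL 0 19 1 0 (CL 0 18 1 0 (CL 0 17 1 0 (CL 0 16 1 0 (CL 0 15 1 0 (CL 1 15 0 15 (CL 1 16 0 16 (CL 1 17 0 17 (CL 1 18 0 18 (CL 1 19 0 19 (CL 1 20 0 20 (CL 1 21 0 21 (CL 1 22 0 22 (CL 1 23 0 23 (CL 1 24 0 24 (CL 1 25 0 25 (CL 1 26 0 26 (CL 1 27 0 27 (CL 1 28 0 28 (CL 1 29 0 29 (CX 1)))))))))))))))))))))))))))))))))))))))))))))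
(CB 4 5
(CT 4 6 5 0 (CL 4 14 2 4 (CL 4 13 2 4 (CL 4 12 2 4 (CL 4 11 2 4 (CL 4 10 2 4 (CL 3 10 2 10 (CL 2 10 2 10 (CL 1 10 2 10 (CL 0 10 2 10 (CL 3 11 2 11 (CL 2 11 2 11 (CL 1 11 2 11 (CL 0 11 2 11 (CL 0 29 1 0 (CL 0 28 1 0 (CL 0 27 1 0 (CL 0 26 1 0 (CL 0 25 1 0 (CL 0 24 1 0 (CL 0 23 1 0 (CL 0 22 1 0 (CL 0 21 1 0 (CL 0 20 1 0 (CL 0 19 1 0 (CL 0 18 1 0 (CL 0 17 1 0 (CL 0 16 1 0 (CL 0 15 1 0 (CL 1 15 0 15 (CL 1 16 0 16 (CL 1 17 0 17 (CL 1 18 0 18 (CL 1 19 0 19 (CL 1 20 0 20 (CL 1 21 0 21 (CL 1 22 0 22 (CL 1 23 0 23 (CL 1 24 0 24 (CL 1 25 0 25 (CL 1 26 0 26 (CL 1 27 0 27 (CL 1 28 0 28 (CL 1 29 0 29 (CX 1)))))))))))))))))))))))))))))))))))))))))))))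
(CB 1 6
(CT 1 7 6 0 (CL 1 14 2 1 (CL 1 13 2 1 (CL 1 12 2 1 (CL 1 11 2 1 (CL 1 10 2 1 (CL 4 10 2 10 (CL 3 10 2 10 (CL 2 10 2 10 (CL 0 10 2 10 (CL 4 11 2 11 (CL 3 11 2 11 (CL 2 11 2 11 (CL 0 11 2 11 (CL 0 29 1 0 (CL 0 28 1 0 (CL 0 27 1 0 (CL 0 26 1 0 (CL 0 25 1 0 (CL 0 24 1 0 (CL 0 23 1 0 (CL 0 22 1 0 (CL 0 21 1 0 (CL 0 20 1 0 (CL 0 19 1 0 (CL 0 18 1 0 (CL 0 17 1 0 (CL 0 16 1 0 (CL 0 15 1 0 (CL 1 15 0 15 (CL 1 16 0 16 (CL 1 17 0 17 (CL 1 18 0 18 (CL 1 19 0 19 (CL 1 20 0 20 (CL 1 21 0 21 (CL 1 22 0 22 (CL 1 23 0 23 (CL 1 24 0 24 (CL 1 25 0 25 (CL 1 26 0 26 (CL 1 27 0 27 (CL 1 28 0 28 (CL 1 29 0 29 (CX 1)))))))))))))))))))))))))))))))))))))))))))))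
(CB 1 7
(CL 1 14 2 1 (CL 1 13 2 1 (CL 1 12 2 1 (CL 1 11 2 1 (CL 1 10 2 1 (CL 4 10 2 10 (CL 3 10 2 10 (CL 2 10 2 10 (CL 0 10 2 10 (CL 4 11 2 11 (CL 3 11 2 11 (CL 2 11 2 11 (CL 0 11 2 11 (CL 0 29 1 0 (CL 0 28 1 0 (CL 0 27 1 0 (CL 0 26 1 0 (CL 0 25 1 0 (CL 0 24 1 0 (CL 0 23 1 0 (CL 0 22 1 0 (CL 0 21 1 0 (CL 0 20 1 0 (CL 0 19 1 0 (CL 0 18 1 0 (CL 0 17 1 0 (CL 0 16 1 0 (CL 0 15 1 0 (CL 1 15 0 15 (CL 1 16 0 16 (CL 1 17 0 17 (CL 1 18 0 18 (CL 1 19 0 19 (CL 1 20 0 20 (CL 1 21 0 21 (CL 1 22 0 22 (CL 1 23 0 23 (CL 1 24 0 24 (CL 1 25 0 25 (CL 1 26 0 26 (CL 1 27 0 27 (CL 1 28 0 28 (CL 1 29 0 29 (CX 1))))))))))))))))))))))))))))))))))))))))))))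
(CB 1 8
(CL 1 14 2 1 (CL 1 13 2 1 (CL 1 12 2 1 (CL 1 11 2 1 (CL 1 10 2 1 (CL 4 10 2 10 (CL 3 10 2 10 (CL 2 10 2 10 (CL 0 10 2 10 (CL 4 11 2 11 (CL 3 11 2 11 (CL 2 11 2 11 (CL 0 11 2 11 (CL 0 29 1 0 (CL 0 28 1 0 (CL 0 27 1 0 (CL 0 26 1 0 (CL 0 25 1 0 (CL 0 24 1 0 (CL 0 23 1 0 (CL 0 22 1 0 (CL 0 21 1 0 (CL 0 20 1 0 (CL 0 19 1 0 (CL 0 18 1 0 (CL 0 17 1 0 (CL 0 16 1 0 (CL 0 15 1 0 (CL 1 15 0 15 (CL 1 16 0 16 (CL 1 17 0 17 (CL 1 18 0 18 (CL 1 19 0 19 (CL 1 20 0 20 (CL 1 21 0 21 (CL 1 22 0 22 (CL 1 23 0 23 (CL 1 24 0 24 (CL 1 25 0 25 (CL 1 26 0 26 (CL 1 27 0 27 (CL 1 28 0 28 (CL 1 29 0 29 (CX 1))))))))))))))))))))))))))))))))))))))))))))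
(CB 1 9
(CL 1 14 2 1 (CL 1 13 2 1 (CL 1 12 2 1 (CL 1 11 2 1 (CL 1 10 2 1 (CL 4 10 2 10 (CL 3 10 2 10 (CL 2 10 2 10 (CL 0 10 2 10 (CL 4 11 2 11 (CL 3 11 2 11 (CL 2 11 2 11 (CL 0 11 2 11 (CL 0 29 1 0 (CL 0 28 1 0 (CL 0 27 1 0 (CL 0 26 1 0 (CL 0 25 1 0 (CL 0 24 1 0 (CL 0 23 1 0 (CL 0 22 1 0 (CL 0 21 1 0 (CL 0 20 1 0 (CL 0 19 1 0 (CL 0 18 1 0 (CL 0 17 1 0 (CL 0 16 1 0 (CL 0 15 1 0 (CL 1 15 0 15 (CL 1 16 0 16 (CL 1 17 0 17 (CL 1 18 0 18 (CL 1 19 0 19 (CL 1 20 0 20 (CL 1 21 0 21 (CL 1 22 0 22 (CL 1 23 0 23 (CL 1 24 0 24 (CL 1 25 0 25 (CL 1 26 0 26 (CL 1 27 0 27 (CL 1 28 0 28 (CL 1 29 0 29 (CX 1))))))))))))))))))))))))))))))))))))))))))))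
(CB 2 6
(CL 2 14 2 2 (CL 2 13 2 2 (CL 2 12 2 2 (CL 2 11 2 2 (CL 2 10 2 2 (CL 3 10 2 10 (CL 1 10 2 10 (CL 0 10 2 10 (CL 3 11 2 11 (CL 1 11 2 11 (CL 0 11 2 11 (CL 0 25 1 0 (CL 0 21 1 0 (CL 0 20 1 0 (CL 0 19 1 0 (CL 0 18 1 0 (CL 0 17 1 0 (CL 0 16 1 0 (CL 0 15 1 0 (CL 1 25 1 1 (CL 1 21 1 1 (CL 1 20 1 1 (CL 1 19 1 1 (CL 1 18 1 1 (CL 1 17 1 1 (CL 1 16 1 1 (CL 1 15 1 1 (CL 4 15 0 15 (CL 3 15 0 15 (CL 2 15 0 15 (CL 1 15 0 15 (CL 0 15 0 15 (CL 4 16 0 16 (CL 3 16 0 16 (CL 2 16 0 16 (CL 1 16 0 16 (CL 0 16 0 16 (CL 4 17 0 17 (CL 3 17 0 17 (CL 2 17 0 17 (CL 1 17 0 17 (CL 0 17 0 17 (CL 4 18 0 18 (CL 3 18 0 18 (CL 2 18 0 18 (CL 1 18 0 18 (CL 0 18 0 18 (CL 4 19 0 19 (CL 3 19 0 19 (CL 2 19 0 19 (CL 1 19 0 19 (CL 0 19 0 19 (CL 4 20 0 20 (CL 3 20 0 20 (CL 2 20 0 20 (CL 1 20 0 20 (CL 0 20 0 20 (CL 4 21 0 21 (CL 3 21 0 21 (CL 2 21 0 21 (CL 1 21 0 21 (CL 0 21 0 21 (CL 4 25 0 25 (CL 3 25 0 25 (CL 2 25 0 25 (CL 1 25 0 25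 (CL 0 25 0 25 (CX 0))))))))))))))))))))))))))))))))))))))))))))))))))))))))))))))))))))
(CB 3 6
(CL 3 14 2 3 (CL 3 13 2 3 (CL 3 12 2 3 (CL 3 11 2 3 (CL 3 10 2 3 (CL 4 10 2 10 (CL 2 10 2 10 (CL 1 10 2 10 (CL 0 10 2 10 (CL 4 11 2 11 (CL 2 11 2 11 (CL 1 11 2 11 (CL 0 11 2 11 (CL 0 25 1 0 (CL 0 21 1 0 (CL 0 20 1 0 (CL 0 19 1 0 (CL 0 18 1 0 (CL 0 17 1 0 (CL 0 16 1 0 (CL 0 15 1 0 (CL 1 25 1 1 (CL 1 21 1 1 (CL 1 20 1 1 (CL 1 19 1 1 (CL 1 18 1 1 (CL 1 17 1 1 (CL 1 16 1 1 (CL 1 15 1 1 (CL 4 15 0 15 (CL 3 15 0 15 (CL 2 15 0 15 (CL 1 15 0 15 (CL 0 15 0 15 (CL 4 16 0 16 (CL 3 16 0 16 (CL 2 16 0 16 (CL 1 16 0 16 (CL 0 16 0 16 (CL 4 17 0 17 (CL 3 17 0 17 (CL 2 17 0 17 (CL 1 17 0 17 (CL 0 17 0 17 (CL 4 18 0 18 (CL 3 18 0 18 (CL 2 18 0 18 (CL 1 18 0 18 (CL 0 18 0 18 (CL 4 19 0 19 (CL 3 19 0 19 (CL 2 19 0 19 (CL 1 19 0 19 (CL 0 19 0 19 (CL 4 20 0 20 (CL 3 20 0 20 (CL 2 20 0 20 (CL 1 20 0 20 (CL 0 20 0 20 (CL 4 21 0 21 (CL 3 21 0 21 (CL 2 21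 0 21 (CL 1 21 0 21 (CL 0 21 0 21 (CL 4 25 0 25 (CL 3 25 0 25 (CL 2 25 0 25 (CL 1 25 0 25 (CL 0 25 0 25 (CX 0))))))))))))))))))))))))))))))))))))))))))))))))))))))))))))))))))))))
(CB 4 6
(CL 4 14 2 4 (CL 4 13 2 4 (CL 4 12 2 4 (CL 4 11 2 4 (CL 4 10 2 4 (CL 3 10 2 10 (CL 2 10 2 10 (CL 1 10 2 10 (CL 0 10 2 10 (CL 3 11 2 11 (CL 2 11 2 11 (CL 1 11 2 11 (CL 0 11 2 11 (CL 0 25 1 0 (CL 0 21 1 0 (CL 0 20 1 0 (CL 0 19 1 0 (CL 0 18 1 0 (CL 0 17 1 0 (CL 0 16 1 0 (CL 0 15 1 0 (CL 1 25 1 1 (CL 1 21 1 1 (CL 1 20 1 1 (CL 1 19 1 1 (CL 1 18 1 1 (CL 1 17 1 1 (CL 1 16 1 1 (CL 1 15 1 1 (CL 4 15 0 15 (CL 3 15 0 15 (CL 2 15 0 15 (CL 1 15 0 15 (CL 0 15 0 15 (CL 4 16 0 16 (CL 3 16 0 16 (CL 2 16 0 16 (CL 1 16 0 16 (CL 0 16 0 16 (CL 4 17 0 17 (CL 3 17 0 17 (CL 2 17 0 17 (CL 1 17 0 17 (CL 0 17 0 17 (CL 4 18 0 18 (CL 3 18 0 18 (CL 2 18 0 18 (CL 1 18 0 18 (CL 0 18 0 18 (CL 4 19 0 19 (CL 3 19 0 19 (CL 2 19 0 19 (CL 1 19 0 19 (CL 0 19 0 19 (CL 4 20 0 20 (CL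 3 20 0 20 (CL 2 20 0 20 (CL 1 20 0 20 (CL 0 20 0 20 (CL 4 21 0 21 (CL 3 21 0 21 (CL 2 21 0 21 (CL 1 21 0 21 (CL 0 21 0 21 (CL 4 25 0 25 (CL 3 25 0 25 (CL 2 25 0 25 (CL 1 25 0 25 (CL 0 25 0 25 (CX 0))))))))))))))))))))))))))))))))))))))))))))))))))))))))))))))))))))))
(CB 2 7
(CL 2 14 2 2 (CL 2 13 2 2 (CL 2 12 2 2 (CL 2 11 2 2 (CL 2 10 2 2 (CL 3 10 2 10 (CL 1 10 2 10 (CL 0 10 2 10 (CL 3 11 2 11 (CL 1 11 2 11 (CL 0 11 2 11 (CL 0 25 1 0 (CL 0 21 1 0 (CL 0 20 1 0 (CL 0 19 1 0 (CL 0 18 1 0 (CL 0 17 1 0 (CL 0 16 1 0 (CL 0 15 1 0 (CL 1 25 1 1 (CL 1 21 1 1 (CL 1 20 1 1 (CL 1 19 1 1 (CL 1 18 1 1 (CL 1 17 1 1 (CL 1 16 1 1 (CL 1 15 1 1 (CL 4 15 0 15 (CL 3 15 0 15 (CL 2 15 0 15 (CL 1 15 0 15 (CL 0 15 0 15 (CL 4 16 0 16 (CL 3 16 0 16 (CL 2 16 0 16 (CL 1 16 0 16 (CL 0 16 0 16 (CL 4 17 0 17 (CL 3 17 0 17 (CL 2 17 0 17 (CL 1 17 0 17 (CL 0 17 0 17 (CL 4 18 0 18 (CL 3 18 0 18 (CL 2 18 0 18 (CL 1 18 0 18 (CL 0 18 0 18 (CL 4 19 0 19 (CL 3 19 0 19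 (CL 2 19 0 19 (CL 1 19 0 19 (CL 0 19 0 19 (CL 4 20 0 20 (CL 3 20 0 20 (CL 2 20 0 20 (CL 1 20 0 20 (CL 0 20 0 20 (CL 4 21 0 21 (CL 3 21 0 21 (CL 2 21 0 21 (CL 1 21 0 21 (CL 0 21 0 21 (CL 4 25 0 25 (CL 3 25 0 25 (CL 2 25 0 25 (CL 1 25 0 25 (CL 0 25 0 25 (CX 0))))))))))))))))))))))))))))))))))))))))))))))))))))))))))))))))))))
(CB 2 8
(CL 2 14 2 2 (CL 2 13 2 2 (CL 2 12 2 2 (CL 2 11 2 2 (CL 2 10 2 2 (CL 3 10 2 10 (CL 1 10 2 10 (CL 0 10 2 10 (CL 3 11 2 11 (CL 1 11 2 11 (CL 0 11 2 11 (CL 0 25 1 0 (CL 0 21 1 0 (CL 0 20 1 0 (CL 0 19 1 0 (CL 0 18 1 0 (CL 0 17 1 0 (CL 0 16 1 0 (CL 0 15 1 0 (CL 1 25 1 1 (CL 1 21 1 1 (CL 1 20 1 1 (CL 1 19 1 1 (CL 1 18 1 1 (CL 1 17 1 1 (CL 1 16 1 1 (CL 1 15 1 1 (CL 4 15 0 15 (CL 3 15 0 15 (CL 2 15 0 15 (CL 1 15 0 15 (CL 0 15 0 15 (CL 4 16 0 16 (CL 3 16 0 16 (CL 2 16 0 16 (CL 1 16 0 16 (CL 0 16 0 16 (CL 4 17 0 17 (CL 3 17 0 17 (CL 2 17 0 17 (CL 1 17 0 17 (CL 0 17 0 17 (CL 4 18 0 18 (CL 3 18 0 18 (CL 2 18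 0 18 (CL 1 18 0 18 (CL 0 18 0 18 (CL 4 19 0 19 (CL 3 19 0 19 (CL 2 19 0 19 (CL 1 19 0 19 (CL 0 19 0 19 (CL 4 20 0 20 (CL 3 20 0 20 (CL 2 20 0 20 (CL 1 20 0 20 (CL 0 20 0 20 (CL 4 21 0 21 (CL 3 21 0 21 (CL 2 21 0 21 (CL 1 21 0 21 (CL 0 21 0 21 (CL 4 25 0 25 (CL 3 25 0 25 (CL 2 25 0 25 (CL 1 25 0 25 (CL 0 25 0 25 (CX 0))))))))))))))))))))))))))))))))))))))))))))))))))))))))))))))))))))
(CB 2 9
(CL 2 14 2 2 (CL 2 13 2 2 (CL 2 12 2 2 (CL 2 11 2 2 (CL 2 10 2 2 (CL 3 10 2 10 (CL 1 10 2 10 (CL 0 10 2 10 (CL 3 11 2 11 (CL 1 11 2 11 (CL 0 11 2 11 (CL 0 25 1 0 (CL 0 21 1 0 (CL 0 20 1 0 (CL 0 19 1 0 (CL 0 18 1 0 (CL 0 17 1 0 (CL 0 16 1 0 (CL 0 15 1 0 (CL 1 25 1 1 (CL 1 21 1 1 (CL 1 20 1 1 (CL 1 19 1 1 (CL 1 18 1 1 (CL 1 17 1 1 (CL 1 16 1 1 (CL 1 15 1 1 (CL 4 15 0 15 (CL 3 15 0 15 (CL 2 15 0 15 (CL 1 15 0 15 (CL 0 15 0 15 (CL 4 16 0 16 (CL 3 16 0 16 (CL 2 16 0 16 (CL 1 16 0 16 (CL 0 16 0 16 (CL 4 17 0 17 (CL 3 17 0 17 (CL 2 17 0 17 (CL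 1 17 0 17 (CL 0 17 0 17 (CL 4 18 0 18 (CL 3 18 0 18 (CL 2 18 0 18 (CL 1 18 0 18 (CL 0 18 0 18 (CL 4 19 0 19 (CL 3 19 0 19 (CL 2 19 0 19 (CL 1 19 0 19 (CL 0 19 0 19 (CL 4 20 0 20 (CL 3 20 0 20 (CL 2 20 0 20 (CL 1 20 0 20 (CL 0 20 0 20 (CL 4 21 0 21 (CL 3 21 0 21 (CL 2 21 0 21 (CL 1 21 0 21 (CL 0 21 0 21 (CL 4 25 0 25 (CL 3 25 0 25 (CL 2 25 0 25 (CL 1 25 0 25 (CL 0 25 0 25 (CX 0))))))))))))))))))))))))))))))))))))))))))))))))))))))))))))))))))))
(CB 3 7
(CL 3 14 2 3 (CL 3 13 2 3 (CL 3 12 2 3 (CL 3 11 2 3 (CL 3 10 2 3 (CL 4 10 2 10 (CL 2 10 2 10 (CL 1 10 2 10 (CL 0 10 2 10 (CL 4 11 2 11 (CL 2 11 2 11 (CL 1 11 2 11 (CL 0 11 2 11 (CL 0 25 1 0 (CL 0 21 1 0 (CL 0 20 1 0 (CL 0 19 1 0 (CL 0 18 1 0 (CL 0 17 1 0 (CL 0 16 1 0 (CL 0 15 1 0 (CL 1 25 1 1 (CL 1 21 1 1 (CL 1 20 1 1 (CL 1 19 1 1 (CL 1 18 1 1 (CL 1 17 1 1 (CL 1 16 1 1 (CL 1 15 1 1 (CL 2 25 1 2 (CL 2 21 1 2 (CL 2 20 1 2 (CL 2 19 1 2 (CL 2 18 1 2 (CL 2 17 1 2 (CL 2 16 1 2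 (CL 2 15 1 2 (CL 4 15 0 15 (CL 3 15 0 15 (CL 2 15 0 15 (CL 1 15 0 15 (CL 0 15 0 15 (CL 4 16 0 16 (CL 3 16 0 16 (CL 2 16 0 16 (CL 1 16 0 16 (CL 0 16 0 16 (CL 4 17 0 17 (CL 3 17 0 17 (CL 2 17 0 17 (CL 1 17 0 17 (CL 0 17 0 17 (CL 4 18 0 18 (CL 3 18 0 18 (CL 2 18 0 18 (CL 1 18 0 18 (CL 0 18 0 18 (CL 4 19 0 19 (CL 3 19 0 19 (CL 2 19 0 19 (CL 1 19 0 19 (CL 0 19 0 19 (CL 4 20 0 20 (CL 3 20 0 20 (CL 2 20 0 20 (CL 1 20 0 20 (CL 0 20 0 20 (CL 4 21 0 21 (CL 3 21 0 21 (CL 2 21 0 21 (CL 1 21 0 21 (CL 0 21 0 21 (CL 4 25 0 25 (CL 3 25 0 25 (CL 2 25 0 25 (CL 1 25 0 25 (CL 0 25 0 25 (CX 0))))))))))))))))))))))))))))))))))))))))))))))))))))))))))))))))))))))))))))))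
(CB 4 7
(CL 4 14 2 4 (CL 4 13 2 4 (CL 4 12 2 4 (CL 4 11 2 4 (CL 4 10 2 4 (CL 3 10 2 10 (CL 2 10 2 10 (CL 1 10 2 10 (CL 0 10 2 10 (CL 3 11 2 11 (CL 2 11 2 11 (CL 1 11 2 11 (CL 0 11 2 11 (CL 0 25 1 0 (CL 0 21 1 0 (CL 0 20 1 0 (CL 0 19 1 0 (CL 0 18 1 0 (CL 0 17 1 0 (CL 0 16 1 0 (CL 0 15 1 0 (CL 1 25 1 1 (CL 1 21 1 1 (CL 1 20 1 1 (CL 1 19 1 1 (CL 1 18 1 1 (CL 1 17 1 1 (CL 1 16 1 1 (CL 1 15 1 1 (CL 2 25 1 2 (CL 2 21 1 2 (CL 2 20 1 2 (CL 2 19 1 2 (CL 2 18 1 2 (CL 2 17 1 2 (CL 2 16 1 2 (CL 2 15 1 2 (CL 4 15 0 15 (CL 3 15 0 15 (CL 2 15 0 15 (CL 1 15 0 15 (CL 0 15 0 15 (CL 4 16 0 16 (CL 3 16 0 16 (CL 2 16 0 16 (CL 1 16 0 16 (CL 0 16 0 16 (CL 4 17 0 17 (CL 3 17 0 17 (CL 2 17 0 17 (CL 1 17 0 17 (CL 0 17 0 17 (CL 4 18 0 18 (CL 3 18 0 18 (CL 2 18 0 18 (CL 1 18 0 18 (CL 0 18 0 18 (CL 4 19 0 19 (CL 3 19 0 19 (CL 2 19 0 19 (CL 1 19 0 19 (CL 0 19 0 19 (CL 4 20 0 20 (CL 3 20 0 20 (CL 2 20 0 20 (CL 1 20 0 20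 (CL 0 20 0 20 (CL 4 21 0 21 (CL 3 21 0 21 (CL 2 21 0 21 (CL 1 21 0 21 (CL 0 21 0 21 (CL 4 25 0 25 (CL 3 25 0 25 (CL 2 25 0 25 (CL 1 25 0 25 (CL 0 25 0 25 (CX 0))))))))))))))))))))))))))))))))))))))))))))))))))))))))))))))))))))))))))))))
(CB 3 8
(CL 3 14 2 3 (CL 3 13 2 3 (CL 3 12 2 3 (CL 3 11 2 3 (CL 3 10 2 3 (CL 4 10 2 10 (CL 2 10 2 10 (CL 1 10 2 10 (CL 0 10 2 10 (CL 4 11 2 11 (CL 2 11 2 11 (CL 1 11 2 11 (CL 0 11 2 11 (CL 0 25 1 0 (CL 0 21 1 0 (CL 0 20 1 0 (CL 0 19 1 0 (CL 0 18 1 0 (CL 0 17 1 0 (CL 0 16 1 0 (CL 0 15 1 0 (CL 1 25 1 1 (CL 1 21 1 1 (CL 1 20 1 1 (CL 1 19 1 1 (CL 1 18 1 1 (CL 1 17 1 1 (CL 1 16 1 1 (CL 1 15 1 1 (CL 2 25 1 2 (CL 2 21 1 2 (CL 2 20 1 2 (CL 2 19 1 2 (CL 2 18 1 2 (CL 2 17 1 2 (CL 2 16 1 2 (CL 2 15 1 2 (CL 4 15 0 15 (CL 3 15 0 15 (CL 2 15 0 15 (CL 1 15 0 15 (CL 0 15 0 15 (CL 4 16 0 16 (CL 3 16 0 16 (CL 2 16 0 16 (CL 1 16 0 16 (CL 0 16 0 16 (CL 4 17 0 17 (CL 3 17 0 17 (CL 2 17 0 17 (CL 1 17 0 17 (CL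 0 17 0 17 (CL 4 18 0 18 (CL 3 18 0 18 (CL 2 18 0 18 (CL 1 18 0 18 (CL 0 18 0 18 (CL 4 19 0 19 (CL 3 19 0 19 (CL 2 19 0 19 (CL 1 19 0 19 (CL 0 19 0 19 (CL 4 20 0 20 (CL 3 20 0 20 (CL 2 20 0 20 (CL 1 20 0 20 (CL 0 20 0 20 (CL 4 21 0 21 (CL 3 21 0 21 (CL 2 21 0 21 (CL 1 21 0 21 (CL 0 21 0 21 (CL 4 25 0 25 (CL 3 25 0 25 (CL 2 25 0 25 (CL 1 25 0 25 (CL 0 25 0 25 (CX 0))))))))))))))))))))))))))))))))))))))))))))))))))))))))))))))))))))))))))))))
(CB 3 9
(CL 3 14 2 3 (CL 3 13 2 3 (CL 3 12 2 3 (CL 3 11 2 3 (CL 3 10 2 3 (CL 4 10 2 10 (CL 2 10 2 10 (CL 1 10 2 10 (CL 0 10 2 10 (CL 4 11 2 11 (CL 2 11 2 11 (CL 1 11 2 11 (CL 0 11 2 11 (CL 0 25 1 0 (CL 0 21 1 0 (CL 0 20 1 0 (CL 0 19 1 0 (CL 0 18 1 0 (CL 0 17 1 0 (CL 0 16 1 0 (CL 0 15 1 0 (CL 1 25 1 1 (CL 1 21 1 1 (CL 1 20 1 1 (CL 1 19 1 1 (CL 1 18 1 1 (CL 1 17 1 1 (CL 1 16 1 1 (CL 1 15 1 1 (CL 2 25 1 2 (CL 2 21 1 2 (CL 2 20 1 2 (CL 2 19 1 2 (CL 2 18 1 2 (CL 2 17 1 2 (CL 2 16 1 2 (CL 2 15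 1 2 (CL 4 15 0 15 (CL 3 15 0 15 (CL 2 15 0 15 (CL 1 15 0 15 (CL 0 15 0 15 (CL 4 16 0 16 (CL 3 16 0 16 (CL 2 16 0 16 (CL 1 16 0 16 (CL 0 16 0 16 (CL 4 17 0 17 (CL 3 17 0 17 (CL 2 17 0 17 (CL 1 17 0 17 (CL 0 17 0 17 (CL 4 18 0 18 (CL 3 18 0 18 (CL 2 18 0 18 (CL 1 18 0 18 (CL 0 18 0 18 (CL 4 19 0 19 (CL 3 19 0 19 (CL 2 19 0 19 (CL 1 19 0 19 (CL 0 19 0 19 (CL 4 20 0 20 (CL 3 20 0 20 (CL 2 20 0 20 (CL 1 20 0 20 (CL 0 20 0 20 (CL 4 21 0 21 (CL 3 21 0 21 (CL 2 21 0 21 (CL 1 21 0 21 (CL 0 21 0 21 (CL 4 25 0 25 (CL 3 25 0 25 (CL 2 25 0 25 (CL 1 25 0 25 (CL 0 25 0 25 (CX 0))))))))))))))))))))))))))))))))))))))))))))))))))))))))))))))))))))))))))))))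
(CB 4 8
(CL 4 14 2 4 (CL 4 13 2 4 (CL 4 12 2 4 (CL 4 11 2 4 (CL 4 10 2 4 (CL 3 10 2 10 (CL 2 10 2 10 (CL 1 10 2 10 (CL 0 10 2 10 (CL 3 11 2 11 (CL 2 11 2 11 (CL 1 11 2 11 (CL 0 11 2 11 (CL 0 25 1 0 (CL 0 21 1 0 (CL 0 20 1 0 (CL 0 19 1 0 (CL 0 18 1 0 (CL 0 17 1 0 (CL 0 16 1 0 (CL 0 15 1 0 (CL 1 25 1 1 (CL 1 21 1 1 (CL 1 20 1 1 (CL 1 19 1 1 (CL 1 18 1 1 (CL 1 17 1 1 (CL 1 16 1 1 (CL 1 15 1 1 (CL 2 25 1 2 (CL 2 21 1 2 (CL 2 20 1 2 (CL 2 19 1 2 (CL 2 18 1 2 (CL 2 17 1 2 (CL 2 16 1 2 (CL 2 15 1 2 (CL 3 25 1 3 (CL 3 21 1 3 (CL 3 20 1 3 (CL 3 19 1 3 (CL 3 18 1 3 (CL 3 17 1 3 (CL 3 16 1 3 (CL 3 15 1 3 (CL 3 15 0 15 (CL 2 15 0 15 (CL 1 15 0 15 (CL 0 15 0 15 (CL 3 16 0 16 (CL 2 16 0 16 (CL 1 16 0 16 (CL 0 16 0 16 (CL 3 17 0 17 (CL 2 17 0 17 (CL 1 17 0 17 (CL 0 17 0 17 (CL 3 18 0 18 (CL 2 18 0 18 (CL 1 18 0 18 (CL 0 18 0 18 (CL 3 19 0 19 (CL 2 19 0 19 (CL 1 19 0 19 (CL 0 19 0 19 (CL 3 20 0 20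 (CL 2 20 0 20 (CL 1 20 0 20 (CL 0 20 0 20 (CL 3 21 0 21 (CL 2 21 0 21 (CL 1 21 0 21 (CL 0 21 0 21 (CL 3 25 0 25 (CL 2 25 0 25 (CL 1 25 0 25 (CL 0 25 0 25 (CX 0))))))))))))))))))))))))))))))))))))))))))))))))))))))))))))))))))))))))))))))
(CB 4 9
(CL 4 14 2 4 (CL 4 13 2 4 (CL 4 12 2 4 (CL 4 11 2 4 (CL 4 10 2 4 (CL 3 10 2 10 (CL 2 10 2 10 (CL 1 10 2 10 (CL 0 10 2 10 (CL 3 11 2 11 (CL 2 11 2 11 (CL 1 11 2 11 (CL 0 11 2 11 (CL 0 25 1 0 (CL 0 21 1 0 (CL 0 20 1 0 (CL 0 19 1 0 (CL 0 18 1 0 (CL 0 17 1 0 (CL 0 16 1 0 (CL 0 15 1 0 (CL 1 25 1 1 (CL 1 21 1 1 (CL 1 20 1 1 (CL 1 19 1 1 (CL 1 18 1 1 (CL 1 17 1 1 (CL 1 16 1 1 (CL 1 15 1 1 (CL 2 25 1 2 (CL 2 21 1 2 (CL 2 20 1 2 (CL 2 19 1 2 (CL 2 18 1 2 (CL 2 17 1 2 (CL 2 16 1 2 (CL 2 15 1 2 (CL 3 25 1 3 (CL 3 21 1 3 (CL 3 20 1 3 (CL 3 19 1 3 (CL 3 18 1 3 (CL 3 17 1 3 (CL 3 16 1 3 (CL 3 15 1 3 (CL 3 15 0 15 (CL 2 15 0 15 (CL 1 15 0 15 (CL 0 15 0 15 (CL 3 16 0 16 (CL 2 16 0 16 (CL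 1 16 0 16 (CL 0 16 0 16 (CL 3 17 0 17 (CL 2 17 0 17 (CL 1 17 0 17 (CL 0 17 0 17 (CL 3 18 0 18 (CL 2 18 0 18 (CL 1 18 0 18 (CL 0 18 0 18 (CL 3 19 0 19 (CL 2 19 0 19 (CL 1 19 0 19 (CL 0 19 0 19 (CL 3 20 0 20 (CL 2 20 0 20 (CL 1 20 0 20 (CL 0 20 0 20 (CL 3 21 0 21 (CL 2 21 0 21 (CL 1 21 0 21 (CL 0 21 0 21 (CL 3 25 0 25 (CL 2 25 0 25 (CL 1 25 0 25 (CL 0 25 0 25 (CX 0))))))))))))))))))))))))))))))))))))))))))))))))))))))))))))))))))))))))))))))
(CB 0 10
(CT 0 14 10 0 (CT 0 11 10 0 (CT 4 10 0 0 (CT 1 10 0 0 (CL 0 29 1 0 (CL 0 28 1 0 (CL 0 27 1 0 (CL 0 26 1 0 (CL 0 25 1 0 (CL 0 24 1 0 (CL 0 23 1 0 (CL 0 22 1 0 (CL 0 21 1 0 (CL 0 20 1 0 (CL 0 19 1 0 (CL 0 18 1 0 (CL 0 17 1 0 (CL 0 16 1 0 (CL 0 15 1 0 (CL 0 14 2 0 (CT 9 14 0 1 (CT 8 14 0 1 (CT 7 14 0 1 (CT 6 14 0 1 (CT 5 14 0 1 (CL 0 11 2 0 (CT 9 11 0 1 (CT 8 11 0 1 (CT 7 11 0 1 (CT 6 11 0 1 (CT 5 11 0 1 (CL 5 13 0 5 (CL 5 12 0 5 (CL 5 10 0 5 (CL 6 13 0 6 (CL 6 12 0 6 (CL 6 10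 0 6 (CL 7 13 0 7 (CL 7 12 0 7 (CL 7 10 0 7 (CL 8 13 0 8 (CL 8 12 0 8 (CL 8 10 0 8 (CL 9 13 0 9 (CL 9 12 0 9 (CL 9 10 0 9 (CL 10 29 1 10 (CL 10 28 1 10 (CL 10 27 1 10 (CL 10 26 1 10 (CL 10 25 1 10 (CL 10 24 1 10 (CL 10 23 1 10 (CL 10 22 1 10 (CL 10 21 1 10 (CL 10 20 1 10 (CL 10 19 1 10 (CL 10 18 1 10 (CL 10 17 1 10 (CL 10 16 1 10 (CL 10 15 1 10 (CL 9 10 2 10 (CT 4 10 9 1 (CT 1 10 9 1 (CL 4 10 2 10 (CE 4 10))))))))))))))))))))))))))))))))))))))))))))))))))))))))))))))))))
(CT 9 10 0 1 (CT 8 10 0 1 (CT 7 10 0 1 (CT 6 10 0 1 (CT 5 10 0 1 (CL 0 26 1 0 (CL 0 25 1 0 (CL 0 21 1 0 (CL 0 20 1 0 (CL 0 16 1 0 (CL 0 15 1 0 (CL 9 10 0 10 (CL 8 10 0 10 (CL 7 10 0 10 (CL 6 10 0 10 (CL 5 10 0 10 (CL 1 10 0 10 (CL 1 10 2 10 (CL 1 15 0 15 (CL 1 16 0 16 (CL 1 20 0 20 (CL 1 21 0 21 (CL 1 25 0 25 (CL 1 26 0 26 (CX 1)))))))))))))))))))))))))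
(CL 0 11 0 0 (CL 0 11 1 0 (CL 9 10 0 10 (CL 9 10 2 10 (CL 8 10 0 10 (CL 8 10 2 10 (CL 7 10 0 10 (CL 7 10 2 10 (CL 6 10 0 10 (CL 6 10 2 10 (CL 5 10 0 10 (CL 5 10 2 10 (CL 9 11 0 11 (CL 9 11 2 11 (CL 8 11 0 11 (CL 8 11 2 11 (CL 7 11 0 11 (CL 7 11 2 11 (CL 6 11 0 11 (CL 6 11 2 11 (CL 5 11 0 11 (CL 5 11 2 11 (CL 5 25 1 5 (CL 5 21 1 5 (CL 5 20 1 5 (CL 5 19 1 5 (CL 5 18 1 5 (CL 5 17 1 5 (CL 5 16 1 5 (CL 5 15 1 5 (CL 6 25 1 6 (CL 6 21 1 6 (CL 6 20 1 6 (CL 6 19 1 6 (CL 6 18 1 6 (CL 6 17 1 6 (CL 6 16 1 6 (CL 6 15 1 6 (CL 7 25 1 7 (CL 7 21 1 7 (CL 7 20 1 7 (CL 7 19 1 7 (CL 7 18 1 7 (CL 7 17 1 7 (CL 7 16 1 7 (CL 7 15 1 7 (CL 8 25 1 8 (CL 8 21 1 8 (CL 8 20 1 8 (CL 8 19 1 8 (CL 8 18 1 8 (CL 8 17 1 8 (CL 8 16 1 8 (CL 8 15 1 8 (CL 9 25 1 9 (CL 9 21 1 9 (CL 9 20 1 9 (CL 9 19 1 9 (CL 9 18 1 9 (CL 9 17 1 9 (CL 9 16 1 9 (CL 9 15 1 9 (CL 9 15 0 15 (CL 8 15 0 15 (CL 7 15 0 15 (CL 6 15 0 15 (CL 5 15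 0 15 (CL 9 16 0 16 (CL 8 16 0 16 (CL 7 16 0 16 (CL 6 16 0 16 (CL 5 16 0 16 (CL 9 17 0 17 (CL 8 17 0 17 (CL 7 17 0 17 (CL 6 17 0 17 (CL 5 17 0 17 (CL 9 18 0 18 (CL 8 18 0 18 (CL 7 18 0 18 (CL 6 18 0 18 (CL 5 18 0 18 (CL 9 19 0 19 (CL 8 19 0 19 (CL 7 19 0 19 (CL 6 19 0 19 (CL 5 19 0 19 (CL 9 20 0 20 (CL 8 20 0 20 (CL 7 20 0 20 (CL 6 20 0 20 (CL 5 20 0 20 (CL 9 21 0 21 (CL 8 21 0 21 (CL 7 21 0 21 (CL 6 21 0 21 (CL 5 21 0 21 (CL 9 25 0 25 (CL 8 25 0 25 (CL 7 25 0 25 (CL 6 25 0 25 (CL 5 25 0 25 (CX 5))))))))))))))))))))))))))))))))))))))))))))))))))))))))))))))))))))))))))))))))))))))))))))))))))))))))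
(CE 0 0))
(CE 0 0))
(CE 0 0))
(CE 0 0))
(CE 0 0))
(CE 0 0))
(CE 0 0))
(CE 0 0))
(CE 0 0))
(CE 0 0))
(CE 0 0))
(CE 0 0))
(CE 0 0))
(CE 0 0))
(CE 0 0))
(CE 0 0))
(CE 0 0))
(CE 0 0))
(CE 0 0))
(CE 0 0))
(CE 0 0))
(CE 0 0))
(CE 0 0))
(CE 0 0))))))))))))))))))))))))))
(CL 0 14 0 0 (CL 0 14 2 0 (CL 0 13 0 0 (CL 0 13 2 0 (CL 0 12 0 0 (CL 0 12 2 0 (CL 0 11 0 0 (CL 0 11 2 0 (CL 0 10 0 0 (CL 0 10 2 0 (CL 0 9 0 0 (CL 0 9 1 0 (CL 0 8 0 0 (CL 0 8 1 0 (CL 0 7 0 0 (CL 0 7 1 0 (CL 0 6 0 0 (CL 0 6 1 0 (CL 5 14 0 5 (CL 5 14 2 5 (CL 5 13 0 5 (CL 5 13 2 5 (CL 5 12 0 5 (CL 5 12 2 5 (CL 5 11 0 5 (CL 5 11 2 5 (CL 5 10 0 5 (CL 5 10 2 5 (CL 6 14 0 6 (CL 6 14 2 6 (CL 6 13 0 6 (CL 6 13 2 6 (CL 6 12 0 6 (CL 6 12 2 6 (CL 6 11 0 6 (CL 6 11 2 6 (CL 6 10 0 6 (CL 6 10 2 6 (CL 7 14 0 7 (CL 7 14 2 7 (CL 7 13 0 7 (CL 7 13 2 7 (CL 7 12 0 7 (CL 7 12 2 7 (CL 7 11 0 7 (CL 7 11 2 7 (CL 7 10 0 7 (CL 7 10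 2 7 (CL 8 14 0 8 (CL 8 14 2 8 (CL 8 13 0 8 (CL 8 13 2 8 (CL 8 12 0 8 (CL 8 12 2 8 (CL 8 11 0 8 (CL 8 11 2 8 (CL 8 10 0 8 (CL 8 10 2 8 (CL 9 14 0 9 (CL 9 14 2 9 (CL 9 13 0 9 (CL 9 13 2 9 (CL 9 12 0 9 (CL 9 12 2 9 (CL 9 11 0 9 (CL 9 11 2 9 (CL 9 10 0 9 (CL 9 10 2 9 (CL 10 25 1 10 (CL 10 21 1 10 (CL 10 20 1 10 (CL 10 19 1 10 (CL 10 18 1 10 (CL 10 17 1 10 (CL 10 16 1 10 (CL 10 15 1 10 (CL 11 25 1 11 (CL 11 21 1 11 (CL 11 20 1 11 (CL 11 19 1 11 (CL 11 18 1 11 (CL 11 17 1 11 (CL 11 16 1 11 (CL 11 15 1 11 (CL 12 25 1 12 (CL 12 21 1 12 (CL 12 20 1 12 (CL 12 19 1 12 (CL 12 18 1 12 (CL 12 17 1 12 (CL 12 16 1 12 (CL 12 15 1 12 (CL 13 25 1 13 (CL 13 21 1 13 (CL 13 20 1 13 (CL 13 19 1 13 (CL 13 18 1 13 (CL 13 17 1 13 (CL 13 16 1 13 (CL 13 15 1 13 (CL 14 25 1 14 (CL 14 21 1 14 (CL 14 20 1 14 (CL 14 19 1 14 (CL 14 18 1 14 (CL 14 17 1 14 (CL 14 16 1 14 (CL 14 15 1 14 (CL 14 15 0 15 (CL 13 15 0 15 (CL 12 15 0 15 (CL 11 15 0 15 (CL 10 15 0 15 (CL 14 16 0 16 (CL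 13 16 0 16 (CL 12 16 0 16 (CL 11 16 0 16 (CL 10 16 0 16 (CL 14 17 0 17 (CL 13 17 0 17 (CL 12 17 0 17 (CL 11 17 0 17 (CL 10 17 0 17 (CL 14 18 0 18 (CL 13 18 0 18 (CL 12 18 0 18 (CL 11 18 0 18 (CL 10 18 0 18 (CL 14 19 0 19 (CL 13 19 0 19 (CL 12 19 0 19 (CL 11 19 0 19 (CL 10 19 0 19 (CL 14 20 0 20 (CL 13 20 0 20 (CL 12 20 0 20 (CL 11 20 0 20 (CL 10 20 0 20 (CL 14 21 0 21 (CL 13 21 0 21 (CL 12 21 0 21 (CL 11 21 0 21 (CL 10 21 0 21 (CL 14 25 0 25 (CL 13 25 0 25 (CL 12 25 0 25 (CL 11 25 0 25 (CL 10 25 0 25 (CX 10)))))))))))))))))))))))))))))))))))))))))))))))))))))))))))))))))))))))))))))))))))))))))))))))))))))))))))))))))))))))))))))))))))))))))))))))))))))).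
Definition cert_000112 : cert :=
(CL 15 29 2 15 (CL 15 28 2 15 (CL 15 27 2 15 (CL 15 26 2 15 (CL 15 25 2 15 (CL 16 29 2 16 (CL 16 28 2 16 (CL 16 27 2 16 (CL 16 26 2 16 (CL 16 25 2 16 (CL 17 29 2 17 (CL 17 28 2 17 (CL 17 27 2 17 (CL 17 26 2 17 (CL 17 25 2 17 (CL 18 29 2 18 (CL 18 28 2 18 (CL 18 27 2 18 (CL 18 26 2 18 (CL 18 25 2 18 (CL 19 29 2 19 (CL 19 28 2 19 (CL 19 27 2 19 (CL 19 26 2 19 (CL 19 25 2 19 (CL 20 29 2 20 (CL 20 28 2 20 (CL 20 27 2 20 (CL 20 26 2 20 (CL 20 25 2 20 (CL 21 29 2 21 (CL 21 28 2 21 (CL 21 27 2 21 (CL 21 26 2 21 (CL 21 25 2 21 (CL 22 29 2 22 (CL 22 28 2 22 (CL 22 27 2 22 (CL 22 26 2 22 (CL 22 25 2 22 (CL 23 29 2 23 (CL 23 28 2 23 (CL 23 27 2 23 (CL 23 26 2 23 (CL 23 25 2 23 (CL 24 29 2 24 (CL 24 28 2 24 (CL 24 27 2 24 (CL 24 26 2 24 (CL 24 25 2 24 (CL 24 25 1 25 (CL 23 25 1 25 (CL 22 25 1 25 (CL 21 25 1 25 (CL 20 25 1 25 (CL 19 25 1 25 (CL 18 25 1 25 (CL 17 25 1 25 (CL 16 25 1 25 (CL 15 25 1 25 (CL 10 25 0 25 (CL 6 25 0 25 (CL 5 25 0 25 (CL 4 25 0 25 (CL 3 25 0 25 (CL 2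 25 0 25 (CL 1 25 0 25 (CL 0 25 0 25 (CL 24 26 1 26 (CL 23 26 1 26 (CL 22 26 1 26 (CL 21 26 1 26 (CL 20 26 1 26 (CL 19 26 1 26 (CL 18 26 1 26 (CL 17 26 1 26 (CL 16 26 1 26 (CL 15 26 1 26 (CL 10 26 0 26 (CL 6 26 0 26 (CL 5 26 0 26 (CL 4 26 0 26 (CL 3 26 0 26 (CL 2 26 0 26 (CL 1 26 0 26 (CL 0 26 0 26 (CL 24 27 1 27 (CL 23 27 1 27 (CL 22 27 1 27 (CL 21 27 1 27 (CL 20 27 1 27 (CL 19 27 1 27 (CL 18 27 1 27 (CL 17 27 1 27 (CL 16 27 1 27 (CL 15 27 1 27 (CL 10 27 0 27 (CL 6 27 0 27 (CL 5 27 0 27 (CL 4 27 0 27 (CL 3 27 0 27 (CL 2 27 0 27 (CL 1 27 0 27 (CL 0 27 0 27 (CL 24 28 1 28 (CL 23 28 1 28 (CL 22 28 1 28 (CL 21 28 1 28 (CL 20 28 1 28 (CL 19 28 1 28 (CL 18 28 1 28 (CL 17 28 1 28 (CL 16 28 1 28 (CL 15 28 1 28 (CL 10 28 0 28 (CL 6 28 0 28 (CL 5 28 0 28 (CL 4 28 0 28 (CL 3 28 0 28 (CL 2 28 0 28 (CL 1 28 0 28 (CL 0 28 0 28 (CL 24 29 1 29 (CL 23 29 1 29 (CL 22 29 1 29 (CL 21 29 1 29 (CL 20 29 1 29 (CL 19 29 1 29 (CL 18 29 1 29 (CL 17 29 1 29 (CL 16 29 1 29 (CL 15 29 1 29 (CL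 10 29 0 29 (CL 6 29 0 29 (CL 5 29 0 29 (CL 4 29 0 29 (CL 3 29 0 29 (CL 2 29 0 29 (CL 1 29 0 29 (CL 0 29 0 29 (CL 0 29 2 0 (CL 0 28 2 0 (CL 0 27 2 0 (CL 0 26 2 0 (CL 0 25 2 0 (CL 1 29 2 1 (CL 1 28 2 1 (CL 1 27 2 1 (CL 1 26 2 1 (CL 1 25 2 1 (CL 2 29 2 2 (CL 2 28 2 2 (CL 2 27 2 2 (CL 2 26 2 2 (CL 2 25 2 2 (CL 3 29 2 3 (CL 3 28 2 3 (CL 3 27 2 3 (CL 3 26 2 3 (CL 3 25 2 3 (CL 4 29 2 4 (CL 4 28 2 4 (CL 4 27 2 4 (CL 4 26 2 4 (CL 4 25 2 4 (CL 5 29 2 5 (CL 5 28 2 5 (CL 5 27 2 5 (CL 5 26 2 5 (CL 5 25 2 5 (CL 6 29 2 6 (CL 6 28 2 6 (CL 6 27 2 6 (CL 6 26 2 6 (CL 6 25 2 6 (CL 10 29 2 10 (CL 10 28 2 10 (CL 10 27 2 10 (CL 10 26 2 10 (CL 10 25 2 10 (CX 25))))))))))))))))))))))))))))))))))))))))))))))))))))))))))))))))))))))))))))))))))))))))))))))))))))))))))))))))))))))))))))))))))))))))))))))))))))))))))))))))))))))))))))))))))))).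
Definition cert_001122 : cert :=
(CB 0 5
(CT 1 5 0 0 (CL 0 29 2 0 (CL 0 28 2 0 (CL 0 27 2 0 (CL 0 26 2 0 (CL 0 25 2 0 (CL 0 24 2 0 (CL 0 23 2 0 (CL 0 22 2 0 (CL 0 21 2 0 (CL 0 20 2 0 (CL 0 19 1 0 (CL 0 18 1 0 (CL 0 17 1 0 (CL 0 16 1 0 (CL 0 15 1 0 (CL 0 14 1 0 (CL 0 13 1 0 (CL 0 12 1 0 (CL 0 11 1 0 (CL 0 10 1 0 (CL 1 10 0 10 (CL 1 11 0 11 (CL 1 12 0 12 (CL 1 13 0 13 (CL 1 14 0 14 (CL 1 15 0 15 (CL 1 16 0 16 (CL 1 17 0 17 (CL 1 18 0 18 (CL 1 19 0 19 (CL 1 20 0 20 (CL 1 21 0 21 (CL 1 22 0 22 (CL 1 23 0 23 (CL 1 24 0 24 (CL 1 25 0 25 (CL 1 26 0 26 (CX 1)))))))))))))))))))))))))))))))))))))))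
(CL 0 19 1 0 (CL 0 18 1 0 (CL 0 17 1 0 (CL 0 16 1 0 (CL 0 15 1 0 (CL 0 14 1 0 (CL 0 13 1 0 (CL 0 12 1 0 (CL 0 11 1 0 (CL 0 10 1 0 (CL 0 9 2 0 (CL 0 8 2 0 (CL 0 7 2 0 (CL 0 6 2 0 (CL 5 19 1 5 (CL 5 18 1 5 (CL 5 17 1 5 (CL 5 16 1 5 (CL 5 15 1 5 (CL 5 14 1 5 (CL 5 13 1 5 (CL 5 12 1 5 (CL 5 11 1 5 (CL 5 10 1 5 (CL 4 5 2 5 (CL 3 5 2 5 (CL 2 5 2 5 (CL 1 5 2 5 (CL 6 19 1 6 (CL 6 18 1 6 (CL 6 17 1 6 (CL 6 16 1 6 (CL 6 15 1 6 (CL 6 14 1 6 (CL 6 13 1 6 (CL 6 12 1 6 (CL 6 11 1 6 (CL 6 10 1 6 (CL 7 19 1 7 (CL 7 18 1 7 (CL 7 17 1 7 (CL 7 16 1 7 (CL 7 15 1 7 (CL 7 14 1 7 (CL 7 13 1 7 (CL 7 12 1 7 (CL 7 11 1 7 (CL 7 10 1 7 (CL 8 19 1 8 (CL 8 18 1 8 (CL 8 17 1 8 (CL 8 16 1 8 (CL 8 15 1 8 (CL 8 14 1 8 (CL 8 13 1 8 (CL 8 12 1 8 (CL 8 11 1 8 (CL 8 10 1 8 (CL 9 19 1 9 (CL 9 18 1 9 (CL 9 17 1 9 (CL 9 16 1 9 (CL 9 15 1 9 (CL 9 14 1 9 (CL 9 13 1 9 (CL 9 12 1 9 (CL 9 11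 1 9 (CL 9 10 1 9 (CL 9 10 0 10 (CL 8 10 0 10 (CL 7 10 0 10 (CL 6 10 0 10 (CL 5 10 0 10 (CL 4 10 0 10 (CL 1 10 0 10 (CL 9 11 0 11 (CL 8 11 0 11 (CL 7 11 0 11 (CL 6 11 0 11 (CL 5 11 0 11 (CL 4 11 0 11 (CL 1 11 0 11 (CL 9 12 0 12 (CL 8 12 0 12 (CL 7 12 0 12 (CL 6 12 0 12 (CL 5 12 0 12 (CL 4 12 0 12 (CL 1 12 0 12 (CL 9 13 0 13 (CL 8 13 0 13 (CL 7 13 0 13 (CL 6 13 0 13 (CL 5 13 0 13 (CL 4 13 0 13 (CL 1 13 0 13 (CL 9 14 0 14 (CL 8 14 0 14 (CL 7 14 0 14 (CL 6 14 0 14 (CL 5 14 0 14 (CL 4 14 0 14 (CL 1 14 0 14 (CL 9 15 0 15 (CL 8 15 0 15 (CL 7 15 0 15 (CL 6 15 0 15 (CL 5 15 0 15 (CL 4 15 0 15 (CL 1 15 0 15 (CL 9 16 0 16 (CL 8 16 0 16 (CL 7 16 0 16 (CL 6 16 0 16 (CL 5 16 0 16 (CL 4 16 0 16 (CL 1 16 0 16 (CL 9 17 0 17 (CL 8 17 0 17 (CL 7 17 0 17 (CL 6 17 0 17 (CL 5 17 0 17 (CL 4 17 0 17 (CL 1 17 0 17 (CL 9 18 0 18 (CL 8 18 0 18 (CL 7 18 0 18 (CL 6 18 0 18 (CL 5 18 0 18 (CL 4 18 0 18 (CL 1 18 0 18 (CL 9 19 0 19 (CL 8 19 0 19 (CL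 7 19 0 19 (CL 6 19 0 19 (CL 5 19 0 19 (CL 4 19 0 19 (CL 1 19 0 19 (CL 1 29 2 1 (CL 1 28 2 1 (CL 1 27 2 1 (CL 1 26 2 1 (CL 1 25 2 1 (CL 1 24 2 1 (CL 1 23 2 1 (CL 1 22 2 1 (CL 1 21 2 1 (CL 1 20 2 1 (CL 1 19 1 1 (CT 1 9 19 2 (CT 1 8 19 2 (CT 1 7 19 2 (CT 1 6 19 2 (CL 1 18 1 1 (CL 1 17 1 1 (CL 1 16 1 1 (CL 1 15 1 1 (CL 1 14 1 1 (CL 1 13 1 1 (CL 1 12 1 1 (CL 1 11 1 1 (CL 1 10 1 1 (CL 2 19 1 2 (CL 2 18 1 2 (CL 2 17 1 2 (CL 2 16 1 2 (CL 2 15 1 2 (CL 2 14 1 2 (CL 2 13 1 2 (CL 2 12 1 2 (CL 2 11 1 2 (CL 2 10 1 2 (CL 3 19 1 3 (CL 3 18 1 3 (CL 3 17 1 3 (CL 3 16 1 3 (CL 3 15 1 3 (CL 3 14 1 3 (CL 3 13 1 3 (CL 3 12 1 3 (CL 3 11 1 3 (CL 3 10 1 3 (CL 4 29 2 4 (CL 4 28 2 4 (CL 4 27 2 4 (CL 4 26 2 4 (CL 4 25 2 4 (CL 4 24 2 4 (CL 4 23 2 4 (CL 4 22 2 4 (CL 4 21 2 4 (CL 4 20 2 4 (CL 4 19 1 4 (CT 4 9 19 2 (CT 4 8 19 2 (CT 4 7 19 2 (CT 4 6 19 2 (CL 4 18 1 4 (CL 4 17 1 4 (CL 4 16 1 4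 (CL 4 15 1 4 (CL 4 14 1 4 (CL 4 13 1 4 (CL 4 12 1 4 (CL 4 11 1 4 (CL 4 10 1 4 (CL 5 20 2 5 (CL 6 20 2 6 (CL 7 20 2 7 (CL 8 20 2 8 (CL 9 20 2 9 (CL 10 20 2 10 (CL 11 20 2 11 (CL 12 20 2 12 (CL 13 20 2 13 (CL 14 20 2 14 (CL 15 20 2 15 (CL 16 20 2 16 (CL 17 20 2 17 (CL 18 20 2 18 (CL 19 20 2 19 (CX 20))))))))))))))))))))))))))))))))))))))))))))))))))))))))))))))))))))))))))))))))))))))))))))))))))))))))))))))))))))))))))))))))))))))))))))))))))))))))))))))))))))))))))))))))))))))))))))))))))))))))))))))))))))))))))))))
(CL 0 29 2 0 (CL 0 28 2 0 (CL 0 27 2 0 (CL 0 26 2 0 (CL 0 25 2 0 (CL 0 24 2 0 (CL 0 23 2 0 (CL 0 22 2 0 (CL 0 21 2 0 (CL 0 20 2 0 (CL 0 9 1 0 (CL 0 8 1 0 (CL 0 7 1 0 (CL 0 6 1 0 (CL 5 29 2 5 (CL 5 28 2 5 (CL 5 27 2 5 (CL 5 26 2 5 (CL 5 25 2 5 (CL 5 24 2 5 (CL 5 23 2 5 (CL 5 22 2 5 (CL 5 21 2 5 (CL 5 20 2 5 (CL 6 29 2 6 (CL 6 28 2 6 (CL 6 27 2 6 (CL 6 26 2 6 (CL 6 25 2 6 (CL 6 24 2 6 (CL 6 23 2 6 (CL 6 22 2 6 (CL 6 21 2 6 (CL 6 20 2 6 (CL 7 29 2 7 (CL 7 28 2 7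 (CL 7 27 2 7 (CL 7 26 2 7 (CL 7 25 2 7 (CL 7 24 2 7 (CL 7 23 2 7 (CL 7 22 2 7 (CL 7 21 2 7 (CL 7 20 2 7 (CL 8 29 2 8 (CL 8 28 2 8 (CL 8 27 2 8 (CL 8 26 2 8 (CL 8 25 2 8 (CL 8 24 2 8 (CL 8 23 2 8 (CL 8 22 2 8 (CL 8 21 2 8 (CL 8 20 2 8 (CL 9 29 2 9 (CL 9 28 2 9 (CL 9 27 2 9 (CL 9 26 2 9 (CL 9 25 2 9 (CL 9 24 2 9 (CL 9 23 2 9 (CL 9 22 2 9 (CL 9 21 2 9 (CL 9 20 2 9 (CL 9 20 0 20 (CL 8 20 0 20 (CL 7 20 0 20 (CL 6 20 0 20 (CL 5 20 0 20 (CL 4 20 0 20 (CL 1 20 0 20 (CL 9 21 0 21 (CL 8 21 0 21 (CL 7 21 0 21 (CL 6 21 0 21 (CL 5 21 0 21 (CL 4 21 0 21 (CL 1 21 0 21 (CL 9 22 0 22 (CL 8 22 0 22 (CL 7 22 0 22 (CL 6 22 0 22 (CL 5 22 0 22 (CL 4 22 0 22 (CL 1 22 0 22 (CL 9 23 0 23 (CL 8 23 0 23 (CL 7 23 0 23 (CL 6 23 0 23 (CL 5 23 0 23 (CL 4 23 0 23 (CL 1 23 0 23 (CL 9 24 0 24 (CL 8 24 0 24 (CL 7 24 0 24 (CL 6 24 0 24 (CL 5 24 0 24 (CL 4 24 0 24 (CL 1 24 0 24 (CL 9 25 0 25 (CL 8 25 0 25 (CL 7 25 0 25 (CL 6 25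 0 25 (CL 5 25 0 25 (CL 4 25 0 25 (CL 1 25 0 25 (CL 9 26 0 26 (CL 8 26 0 26 (CL 7 26 0 26 (CL 6 26 0 26 (CL 5 26 0 26 (CL 4 26 0 26 (CL 1 26 0 26 (CL 4 27 0 27 (CL 1 27 0 27 (CL 4 28 0 28 (CL 1 28 0 28 (CL 9 29 0 29 (CL 8 29 0 29 (CL 4 29 0 29 (CL 1 29 0 29 (CL 1 29 2 1 (CL 1 28 2 1 (CL 1 27 2 1 (CL 1 26 2 1 (CL 1 25 2 1 (CL 1 24 2 1 (CL 1 23 2 1 (CL 1 22 2 1 (CL 1 21 2 1 (CL 1 20 2 1 (CL 1 11 1 1 (CL 1 10 1 1 (CL 4 29 2 4 (CT 4 9 29 1 (CT 4 8 29 1 (CL 4 28 2 4 (CL 4 27 2 4 (CL 4 26 2 4 (CL 4 25 2 4 (CL 4 24 2 4 (CL 4 23 2 4 (CL 4 22 2 4 (CL 4 21 2 4 (CL 4 20 2 4 (CL 4 11 1 4 (CL 4 10 1 4 (CL 5 11 1 5 (CL 5 10 1 5 (CL 6 11 1 6 (CL 6 10 1 6 (CL 7 11 1 7 (CL 7 10 1 7 (CL 8 11 1 8 (CL 8 10 1 8 (CL 9 11 1 9 (CL 9 10 1 9 (CL 9 10 0 10 (CL 8 10 0 10 (CL 7 10 0 10 (CL 6 10 0 10 (CL 5 10 0 10 (CT 0 10 5 2 (CL 3 10 0 10 (CL 2 10 0 10 (CL 0 10 0 10 (CT 0 11 10 1 (CL 11 29 2 11 (CL 11 28 2 11 (CL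 11 27 2 11 (CL 11 26 2 11 (CL 11 25 2 11 (CL 11 24 2 11 (CL 11 23 2 11 (CL 11 22 2 11 (CL 11 21 2 11 (CL 11 20 2 11 (CL 11 19 2 11 (CL 11 18 2 11 (CL 11 17 2 11 (CL 11 16 2 11 (CL 11 15 2 11 (CL 9 11 0 11 (CL 8 11 0 11 (CL 7 11 0 11 (CL 6 11 0 11 (CL 5 11 0 11 (CT 0 11 5 2 (CT 4 11 0 0 (CT 4 9 11 2 (CT 4 8 9 0 (CT 4 11 8 2 (CE 4 11)))))))))))))))))))))))))))))))))))))))))))))))))))))))))))))))))))))))))))))))))))))))))))))))))))))))))))))))))))))))))))))))))))))))))))))))))))))))))))))))))))))))))))))))))))))))))))))))))).

Lemma cert0 : check (dinit [:: 0; 0; 0; 0; 0; 0]) cert_000000. Proof. by vm_compute. Qed.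
Lemma cert1 : check (dinit [:: 0; 0; 0; 0; 0; 1]) cert_000001. Proof. by vm_compute. Qed.
Lemma cert2 : check (dinit [:: 0; 0; 0; 0; 1; 1]) cert_000011. Proof. by vm_compute. Qed.
Lemma cert3 : check (dinit [:: 0; 0; 0; 0; 1; 2]) cert_000012. Proof. by vm_compute. Qed.
Lemma cert4 : check (dinit [:: 0; 0; 0; 1; 1; 1]) cert_000111. Proof. by vm_compute. Qed.
Lemma cert5 : check (dinit [:: 0; 0; 0; 1; 1; 2]) cert_000112. Proof. by vm_compute. Qed.
Lemma cert6 : check (dinit [:: 0; 0; 1; 1; 2; 2]) cert_001122. Proof. by vm_compute. Qed.

Lemma key (col : nat -> nat -> nat) :
  (forall x y, col x y = col y x) -> (forall x y, col x y < 3) ->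
  (forall x y z, x < 30 -> y < 30 -> z < 30 -> adjb x y -> adjb y z -> adjb x z ->
     col x y = col y z -> col x y = col x z -> False) -> False.
Proof.
move=> hsym hlt hnm.
have hcv : cvec col \in allsplits 6.
  apply: mem_allsplits; first by rewrite size_map size_iota.
  by apply/allP => c /mapP [k _ ->]; apply: hlt.
move: allgood; rewrite /goodcv => /allP /(_ _ hcv) /and3P [hs hp hpat].
set p := choosep (cvec col) in hs hp hpat.
set s := chooses p (cvec col) in hs hpat.
have hsym' : forall x y, colp p s col x y = colp p s col y x by move=> x y; apply: colp_sym.
have hlt' : forall x y, colp p s col x y < 3 by move=> x y; apply: colp_lt.
have hnm' := colp_NM hlt hnm hs hp.
have hS := Sound_dinit hsym' hlt' hnm'.
rewrite cvec_colp // in hS.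
have hL : forall d v, Sound (colp p s col) d -> v < 30 -> locfeas d v.
  by move=> d v; apply: LocalSound.
have CS := check_sound hsym' hlt' hnm' hL.
move: hpat hS; rewrite /pats !inE.
case/orP => [/eqP -> | ]; first exact: CS cert0.
case/orP => [/eqP -> | ]; first exact: CS cert1.
case/orP => [/eqP -> | ]; first exact: CS cert2.
case/orP => [/eqP -> | ]; first exact: CS cert3.
case/orP => [/eqP -> | ]; first exact: CS cert4.
case/orP => [/eqP -> | /eqP -> ]; first exact: CS cert5.
exact: CS cert6.
Qed.

Definition TT := ('I_5 + ('I_5 + ('I_5 + ('I_5 + ('I_5 + 'I_5)))))%type.
Definition fv (x : nat) : TT :=
  let p := (Ordinal (ps_lt x) : 'I_5) in
  match cp x with
  | 0 => inl p
  | 1 => inr (inl p)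
  | 2 => inr (inr (inl p))
  | 3 => inr (inr (inr (inl p)))
  | 4 => inr (inr (inr (inr (inl p))))
  | _ => inr (inr (inr (inr (inr p))))
  end.

Lemma fv_adj_all : all (fun x => all (fun y => H6C5 (fv x) (fv y) == adjb x y) (iota 0 30)) (iota 0 30).
Proof. by vm_compute. Qed.
Lemma fv_inj_all : all (fun x => all (fun y => (fv x == fv y) ==> (x == y)) (iota 0 30)) (iota 0 30).
Proof. by vm_compute. Qed.

Lemma fv_adj x y : x < 30 -> y < 30 -> H6C5 (fv x) (fv y) = adjb x y.
Proof.
move=> hx hy; move/allP: fv_adj_all => /(_ x); rewrite mem_iota leq0n add0n hx => /(_ isT).
by move/allP => /(_ y); rewrite mem_iota leq0n add0n hy => /(_ isT) /eqP.
Qed.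
Lemma fv_inj x y : x < 30 -> y < 30 -> fv x = fv y -> x = y.
Proof.
move=> hx hy e; move/allP: fv_inj_all => /(_ x); rewrite mem_iota leq0n add0n hx => /(_ isT).
by move/allP => /(_ y); rewrite mem_iota leq0n add0n hy => /(_ isT); rewrite e eqxx => /eqP.
Qed.

Theorem mainTheorem1 : edge_arrows H6C5 three3.
Proof.
move=> c.
pose col x y := nat_of_ord (c [set fv x; fv y]).
have hsym : forall x y, col x y = col y x by move=> x y; rewrite /col setUC.
have hlt : forall x y, col x y < 3 by move=> x y; apply: ltn_ord.
case: (classic (exists x y z, [/\ x < 30, y < 30, z < 30, adjb x y &
          [/\ adjb y z, adjb x z, col x y = col y z & col x y = col x z]])) => [|hn]; last first.
  exfalso; apply: (key hsym hlt) => x y z hx hy hz hxy hyz hxz e1 e2.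
  by apply: hn; exists x, y, z.
case=> x [y [z [hx hy hz hxy [hyz hxz e1 e2]]]].
have nxy : fv x != fv y by apply/eqP => /(fv_inj hx hy) e; move: hxy; rewrite e adjb_irr.
have nyz : fv y != fv z by apply/eqP => /(fv_inj hy hz) e; move: hyz; rewrite e adjb_irr.
have nxz : fv x != fv z by apply/eqP => /(fv_inj hx hz) e; move: hxz; rewrite e adjb_irr.
have mem3 : forall a, a \in [set fv x; fv y; fv z] -> [\/ a = fv x, a = fv y | a = fv z].
  by move=> a; rewrite !inE => /orP [/orP [] | ] /eqP ->; [constructor 1 | constructor 2 | constructor 3].
exists (c [set fv x; fv y]), [set fv x; fv y; fv z]; split.
- rewrite /three3 setUC cardsU1 cards2 nxy !inE.
  by rewrite (eq_sym (fv z)) (negbTE nxz) (eq_sym (fv z)) (negbTE nyz).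
- move=> a b /mem3 [] -> /mem3 [] -> //; rewrite ?eqxx // => _;
  rewrite fv_adj // ?(adjb_sym y x) ?(adjb_sym z x) ?(adjb_sym z y) //.
- have e3 : c [set fv y; fv z] = c [set fv x; fv y] by apply: val_inj; rewrite /= -/(col y z) -e1.
  have e4 : c [set fv x; fv z] = c [set fv x; fv y] by apply: val_inj; rewrite /= -/(col x z) -e2.
  move=> a b /mem3 [] -> /mem3 [] -> //; rewrite ?eqxx // => _;
  by rewrite ?e3 ?e4 // setUC ?e3 ?e4.
Qed.
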